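(* The Shrikhande graph has no quantum symmetry, i.e. $C(G_{aut}^+(\Gamma))$ is commutative for $\Gamma$ the Shrikhande graph. (In contrast, the $4\times4$ rook's graph $H(2,4)$, which is strongly regular with the same parameters $(16,6,2,2)$, has quantum symmetry.)
   Context: The Shrikhande graph is the Cayley graph of $\mathbb Z_4\times\mathbb Z_4$ with connection set $\{\pm(1,0),\pm(0,1),\pm(1,1)\}$; it is strongly regular with parameters $(16,6,2,2)$ (16 vertices, 6-regular, any two adjacent vertices have 2 common neighbors, any two non-adjacent distinct vertices have 2 common neighbors) and has clique number three. The $4\times4$ rook's graph $H(2,4)$ has vertex set $\{1,2,3,4\}^2$, two vertices adjacent iff they differ in exactly one coordinate. For a finite simple undirected graph $\Gamma=(V,E)$ with $V=\{1,\dots,n\}$, $C(G_{aut}^+(\Gamma))$ is the universal unital $C^*$-algebra generated by $u_{ij}$, $1\le i,j\le n$, with relations: (R1) $u_{ij}=u_{ij}^*=u_{ij}^2$; (R2) $\sum_{l} u_{il}=1=\sum_{l} u_{li}$ for all $i$; (R3) $u_{ij}u_{kl}=u_{kl}u_{ij}=0$ whenever exactly one of $(i,k)\in E$, $(j,l)\in E$ holds. $\Gamma$ has no quantum symmetry if this algebra is commutative, and has quantum symmetry otherwise. *)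

(* Defs.v *)
From Stdlib Require Import Reals List.
Import ListNotations.
Open Scope R_scope.

Definition C : Type := (R * R)%type.
Definition Cadd (a b : C) : C := (fst a + fst b, snd a + snd b).
Definition Cmul (a b : C) : C :=
  (fst a * fst b - snd a * snd b, fst a * snd b + snd a * fst b).
Definition Cconj (a : C) : C := (fst a, - snd a).
Definition Cone : C := (1, 0).
Definition Cmod (a : C) : R := sqrt (fst a * fst a + snd a * snd a).

Record CStarAlgebra := {
  car :> Type;
  cz : car; co : car;
  cadd : car -> car -> car; copp : car -> car;
  cmul : car -> car -> car;
  cscal : C -> car -> car;
  cstar : car -> car;
  cnorm : car -> R;
  cadd_assoc : forall x y z, cadd x (cadd y z) = cadd (cadd x y) z;
  cadd_comm : forall x y, cadd x y = cadd y x;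
  cadd_0l : forall x, cadd cz x = x;
  cadd_oppl : forall x, cadd (copp x) x = cz;
  cscal_addl : forall a b x, cscal (Cadd a b) x = cadd (cscal a x) (cscal b x);
  cscal_addr : forall a x y, cscal a (cadd x y) = cadd (cscal a x) (cscal a y);
  cscal_mul : forall a b x, cscal (Cmul a b) x = cscal a (cscal b x);
  cscal_1 : forall x, cscal Cone x = x;
  cmul_assoc : forall x y z, cmul x (cmul y z) = cmul (cmul x y) z;
  cmul_1l : forall x, cmul co x = x;
  cmul_1r : forall x, cmul x co = x;
  cmul_addl : forall x y z, cmul (cadd x y) z = cadd (cmul x z) (cmul y z);
  cmul_addr : forall x y z, cmul x (cadd y z) = cadd (cmul x y) (cmul x z);
  cscal_mull : forall a x y, cscal a (cmul x y) = cmul (cscal a x) y;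
  cscal_mulr : forall a x y, cscal a (cmul x y) = cmul x (cscal a y);
  cstar_invol : forall x, cstar (cstar x) = x;
  cstar_add : forall x y, cstar (cadd x y) = cadd (cstar x) (cstar y);
  cstar_mul : forall x y, cstar (cmul x y) = cmul (cstar y) (cstar x);
  cstar_scal : forall a x, cstar (cscal a x) = cscal (Cconj a) (cstar x);
  cnorm_eq0 : forall x, cnorm x = 0 <-> x = cz;
  cnorm_triangle : forall x y, cnorm (cadd x y) <= cnorm x + cnorm y;
  cnorm_scal : forall a x, cnorm (cscal a x) = Cmod a * cnorm x;
  cnorm_submult : forall x y, cnorm (cmul x y) <= cnorm x * cnorm y;
  cnorm_cstar : forall x, cnorm (cmul (cstar x) x) = cnorm x * cnorm x;
  ccomplete : forall s : nat -> car,
    (forall eps, 0 < eps -> exists N, forall m n, (N <= m)%nat -> (N <= n)%nat ->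
        cnorm (cadd (s m) (copp (s n))) < eps) ->
    exists l, forall eps, 0 < eps -> exists N, forall n, (N <= n)%nat ->
        cnorm (cadd (s n) (copp l)) < eps
}.

Arguments cz {_}. Arguments co {_}. Arguments cadd {_} _ _. Arguments copp {_} _.
Arguments cmul {_} _ _. Arguments cscal {_} _ _. Arguments cstar {_} _.
Arguments cnorm {_} _.

(* A graph is given by a vertex type V, an exhaustive duplicate-free list of
   vertices, and a boolean adjacency relation (symmetric, irreflexive). *)
Definition sumA {A : CStarAlgebra} {V : Type} (vs : list V) (f : V -> A) : A :=
  fold_right (fun v acc => cadd (f v) acc) cz vs.

(* The defining relations (R1)-(R3) of C(G_aut^+(Gamma)) realised in a
   C*-algebra A by a family u. *)
Definition magic_unitary_for {V : Type} (vs : list V) (adj : V -> V -> bool)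
    (A : CStarAlgebra) (u : V -> V -> A) : Prop :=
  (forall i j, u i j = cstar (u i j) /\ u i j = cmul (u i j) (u i j)) /\
  (forall i, sumA vs (fun l => u i l) = co /\ sumA vs (fun l => u l i) = co) /\
  (forall i j k l, xorb (adj i k) (adj j l) = true ->
      cmul (u i j) (u k l) = cz /\ cmul (u k l) (u i j) = cz).

(* Gamma has no quantum symmetry iff the universal C*-algebra C(G_aut^+(Gamma))
   is commutative, i.e. (by its universal property) iff in every C*-algebra, any
   family satisfying (R1)-(R3) consists of pairwise commuting elements. *)
Definition no_quantum_symmetry {V : Type} (vs : list V) (adj : V -> V -> bool) : Prop :=
  forall (A : CStarAlgebra) (u : V -> V -> A),
    magic_unitary_for vs adj A u ->
    forall i j k l, cmul (u i j) (u k l) = cmul (u k l) (u i j).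

Inductive Z4 := z0 | z1 | z2 | z3.

Definition z4_of_nat (n : nat) : Z4 :=
  match Nat.modulo n 4 with 0 => z0 | 1 => z1 | 2 => z2 | _ => z3 end.
Definition nat_of_z4 (a : Z4) : nat :=
  match a with z0 => 0 | z1 => 1 | z2 => 2 | z3 => 3 end.
Definition z4_add (a b : Z4) : Z4 := z4_of_nat (nat_of_z4 a + nat_of_z4 b).
Definition z4_opp (a : Z4) : Z4 := z4_of_nat (4 - nat_of_z4 a).
Definition z4_eqb (a b : Z4) : bool := Nat.eqb (nat_of_z4 a) (nat_of_z4 b).

Definition ShV : Type := (Z4 * Z4)%type.
Definition z4_all : list Z4 := [z0; z1; z2; z3].
Definition sh_vertices : list ShV := list_prod z4_all z4_all.

Definition sh_conn (d : ShV) : bool :=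
  match d with
  | (z1, z0) | (z3, z0) | (z0, z1) | (z0, z3) | (z1, z1) | (z3, z3) => true
  | _ => false
  end.

Definition sh_adj (x y : ShV) : bool :=
  sh_conn (z4_add (fst y) (z4_opp (fst x)), z4_add (snd y) (z4_opp (snd x))).

(* Main.v *)
Require Import Defs.
From Stdlib Require Import Reals List Lra ZArith Permutation Bool Arith Lia.
From Stdlib Require Import Sorting.Mergesort Orders.
Import ListNotations.

Section Alg.
Variable A : CStarAlgebra.

Local Infix "+" := cadd.
Local Infix "*" := cmul.

Lemma cadd_0r (x : A) : x + cz = x.
Proof. rewrite cadd_comm. apply cadd_0l. Qed.

Lemma cadd_oppr (x : A) : x + copp x = cz.
Proof. rewrite cadd_comm. apply cadd_oppl. Qed.

Lemma cadd_cancel_l (a x y : A) : a + x = a + y -> x = y.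
Proof.
  intros H. rewrite <- (cadd_0l _ x), <- (cadd_0l _ y).
  rewrite <- (cadd_oppl _ a), <- !cadd_assoc, H. reflexivity.
Qed.

Lemma self_add_zero (x : A) : x + x = x -> x = cz.
Proof. intros H. apply (cadd_cancel_l x). rewrite H, cadd_0r. reflexivity. Qed.

Lemma cmul_0l (x : A) : cz * x = cz.
Proof. apply self_add_zero. rewrite <- cmul_addl, cadd_0l. reflexivity. Qed.

Lemma cmul_0r (x : A) : x * cz = cz.
Proof. apply self_add_zero. rewrite <- cmul_addr, cadd_0l. reflexivity. Qed.

Lemma cscal_0r a : cscal a (cz : A) = cz.
Proof. apply self_add_zero. rewrite <- cscal_addr, cadd_0l. reflexivity. Qed.

Lemma copp_unique (x y : A) : x + y = cz -> y = copp x.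
Proof.
  intros H. apply (cadd_cancel_l x). rewrite H, cadd_oppr. reflexivity.
Qed.

Lemma sub_eq0 (x y : A) : x + copp y = cz -> x = y.
Proof.
  intros H. assert (E := copp_unique _ _ H).
  rewrite <- (cadd_0r x). rewrite <- (cadd_oppl _ y). rewrite cadd_assoc.
  rewrite H, cadd_0l. reflexivity.
Qed.

Lemma copp_cz : copp (cz : A) = cz.
Proof. symmetry. apply copp_unique. apply cadd_0l. Qed.

Lemma copp_add (x y : A) : copp (x + y) = copp x + copp y.
Proof.
  symmetry. apply copp_unique.
  rewrite (cadd_comm _ (copp x)). rewrite cadd_assoc.
  rewrite <- (cadd_assoc _ x y (copp y)). rewrite cadd_oppr, cadd_0r, cadd_oppr. reflexivity.
Qed.

Lemma copp_mull (x y : A) : copp x * y = copp (x * y).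
Proof. apply copp_unique. rewrite <- cmul_addl, cadd_oppr, cmul_0l. reflexivity. Qed.

Lemma copp_mulr (x y : A) : x * copp y = copp (x * y).
Proof. apply copp_unique. rewrite <- cmul_addr, cadd_oppr, cmul_0r. reflexivity. Qed.

Lemma cstar_cz : cstar (cz : A) = cz.
Proof.
  apply self_add_zero. rewrite <- cstar_add, cadd_0l. reflexivity.
Qed.

Lemma cstar_opp (x : A) : cstar (copp x) = copp (cstar x).
Proof. apply copp_unique. rewrite <- cstar_add, cadd_oppr, cstar_cz. reflexivity. Qed.

Lemma cnorm_cz : cnorm (cz : A) = 0.
Proof. apply cnorm_eq0. reflexivity. Qed.

Lemma cstar_zero (x : A) : cmul (cstar x) x = cz -> x = cz.
Proof.
  intros H. apply cnorm_eq0. assert (E := cnorm_cstar _ x). rewrite H, cnorm_cz in E.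
  nra.
Qed.

Definition zmul (c : Z) (x : A) : A := cscal (IZR c, 0) x.

Lemma zmul_add c1 c2 x : zmul (c1 + c2)%Z x = zmul c1 x + zmul c2 x.
Proof.
  unfold zmul. rewrite <- cscal_addl. unfold Cadd; simpl. rewrite plus_IZR.
  f_equal. f_equal. lra.
Qed.

Lemma zmul_mul c1 c2 x : zmul (c1 * c2)%Z x = zmul c1 (zmul c2 x).
Proof.
  unfold zmul. rewrite <- cscal_mul. unfold Cmul; simpl. rewrite mult_IZR.
  f_equal. f_equal; lra.
Qed.

Lemma zmul_1 x : zmul 1 x = x.
Proof. unfold zmul. apply cscal_1. Qed.

Lemma zmul_0 x : zmul 0 x = cz.
Proof.
  apply self_add_zero. rewrite <- zmul_add. reflexivity.
Qed.

Lemma zmul_cz c : zmul c cz = cz.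
Proof. apply cscal_0r. Qed.

Lemma zmul_addr c x y : zmul c (x + y) = zmul c x + zmul c y.
Proof. apply cscal_addr. Qed.

Lemma zmul_mull c x y : zmul c (x * y) = zmul c x * y.
Proof. apply cscal_mull. Qed.

Lemma zmul_mulr c x y : zmul c (x * y) = x * zmul c y.
Proof. apply cscal_mulr. Qed.

Lemma zmul_inj c x : c <> 0%Z -> zmul c x = cz -> x = cz.
Proof.
  intros Hc H. unfold zmul in H.
  assert (E : cscal (Rinv (IZR c), 0) (cscal (IZR c, 0) x) = x).
  { rewrite <- cscal_mul. unfold Cmul; simpl.
    replace (Rminus (Rmult (Rinv (IZR c)) (IZR c)) (Rmult 0 0), Rplus (Rmult (Rinv (IZR c)) 0) (Rmult 0 (IZR c))) with Cone.
    - apply cscal_1.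
    - unfold Cone. apply eq_sym. f_equal.
      + field. apply not_0_IZR. exact Hc.
      + ring. }
  rewrite <- E, H. apply cscal_0r.
Qed.

End Alg.

Definition letter := (nat * nat)%type.
Definition word := list letter.
Definition fsum := list (Z * word).

Definition vx (n : nat) : ShV := (z4_of_nat (n / 4), z4_of_nat (n mod 4)).
Definition adjn (a b : nat) : bool := sh_adj (vx a) (vx b).

Definition lkey (p : letter) : nat := fst p * 16 + snd p.

Fixpoint wleb (v w : word) : bool :=
  match v, w with
  | [], _ => true
  | _ :: _, [] => false
  | x :: v', y :: w' => if Nat.ltb (lkey x) (lkey y) then true
                        else if Nat.ltb (lkey y) (lkey x) then false
                        else wleb v' w'
  end.

Fixpoint weqb (v w : word) : bool :=
  match v, w with
  | [], [] => true
  | x :: v', y :: w' => Nat.eqb (fst x) (fst y) && Nat.eqb (snd x) (snd y) && weqb v' w'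
  | _, _ => false
  end.

Lemma weqb_eq v w : weqb v w = true -> v = w.
Proof.
  revert w; induction v as [|[a b] v IH]; intros [|[c d] w]; simpl; try discriminate; auto.
  intros H. apply andb_prop in H as [H1 H3]. apply andb_prop in H1 as [H1 H2].
  apply Nat.eqb_eq in H1, H2. subst. f_equal. auto.
Qed.

Lemma wleb_total v w : wleb v w = true \/ wleb w v = true.
Proof.
  revert w; induction v as [|x v IH]; intros [|y w]; simpl; auto.
  destruct (Nat.ltb (lkey x) (lkey y)) eqn:E1; auto.
  destruct (Nat.ltb (lkey y) (lkey x)) eqn:E2; auto.
Qed.

Module TermOrder <: TotalLeBool'.
  Definition t := (Z * word)%type.
  Definition leb (x y : t) : bool := wleb (snd x) (snd y).
  Lemma leb_total : forall x y, leb x y = true \/ leb y x = true.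
  Proof. intros. apply wleb_total. Qed.
End TermOrder.

Module TermSort := Sort TermOrder.

Fixpoint compress (c : Z) (w : word) (F : fsum) : fsum :=
  match F with
  | [] => [(c, w)]
  | (c2, w2) :: F' => if weqb w w2 then compress (c + c2)%Z w F'
                      else (c, w) :: compress c2 w2 F'
  end.

Definition compress0 (F : fsum) : fsum :=
  match F with [] => [] | (c, w) :: F' => compress c w F' end.

Definition dropzero (F : fsum) : fsum := filter (fun t => negb (Z.eqb (fst t) 0)) F.

Fixpoint dedup (w : word) : word :=
  match w with
  | x :: ((y :: _) as w') => if Nat.eqb (fst x) (fst y) && Nat.eqb (snd x) (snd y) then dedup w' else x :: dedup w'
  | _ => w
  end.

Fixpoint haszp (zp : letter -> letter -> bool) (w : word) : bool :=
  match w with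
  | x :: ((y :: _) as w') => zp x y || haszp zp w'
  | _ => false
  end.

Fixpoint hasz3 (z3 : word -> bool) (w : word) : bool :=
  match w with
  | x :: ((y :: z :: _) as w') => z3 [x; y; z] || hasz3 z3 w'
  | _ => false
  end.

Definition simpw zp z3 (w : word) : option word :=
  let w' := dedup w in if haszp zp w' || hasz3 z3 w' then None else Some w'.

Definition simpF zp z3 (F : fsum) : fsum :=
  flat_map (fun t => match simpw zp z3 (snd t) with Some w => [(fst t, w)] | None => [] end) F.

Definition normF zp z3 (F : fsum) : fsum :=
  dropzero (compress0 (TermSort.sort (simpF zp z3 F))).

Definition scaleF (c : Z) (F : fsum) : fsum := map (fun t => ((c * fst t)%Z, snd t)) F.

Inductive inst :=
| IIns (w1 w2 : word) (col : bool) (a : nat)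
| IComm (w1 : word) (p : letter) (q : list letter) (w2 : word) (col : bool).

Definition mkl (col : bool) (a b : nat) : letter := if col then (b, a) else (a, b).

Definition inst_sum (i : inst) : fsum :=
  match i with
  | IIns w1 w2 col a => (1%Z, w1 ++ w2) :: map (fun b => ((-1)%Z, w1 ++ mkl col a b :: w2)) (seq 0 16)
  | IComm w1 p q w2 _ => flat_map (fun r => [(1%Z, w1 ++ p :: r :: w2); ((-1)%Z, w1 ++ r :: p :: w2)]) q
  end.

Definition lt16 (x : letter) : bool := Nat.ltb (fst x) 16 && Nat.ltb (snd x) 16.
Definition leqb (x y : letter) : bool := Nat.eqb (fst x) (fst y) && Nat.eqb (snd x) (snd y).
Definition lmem (x : letter) (l : list letter) : bool := existsb (leqb x) l.

Fixpoint nleqb (l m : list nat) : bool :=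
  match l, m with
  | [], [] => true
  | x :: l', y :: m' => Nat.eqb x y && nleqb l' m'
  | _, _ => false
  end.

Lemma nleqb_eq l m : nleqb l m = true -> l = m.
Proof.
  revert m; induction l as [|x l IH]; intros [|y m]; simpl; try discriminate; auto.
  intros H. apply andb_prop in H as [H1 H2]. apply Nat.eqb_eq in H1. subst. f_equal; auto.
Qed.

(* comm_ok: q all in line a (row if col=false, else column), sorted strictly by the other coordinate,
   pairwise zp-orthogonal, and for each r in q and each b not in q, [r; p; mkl col a b] is zero *)
Definition comm_ok zp z3 (p : letter) (q : list letter) (col : bool) : bool :=
  match q with
  | [] => false
  | r0 :: _ =>
    let a := if col then snd r0 else fst r0 in
    Nat.ltb a 16 && lt16 p &&
    forallb (fun r => leqb r (mkl col a (if col then fst r else snd r))) q &&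
    forallb lt16 q &&
    (let oth := map (fun r => if col then fst r else snd r) q in
     nleqb (filter (fun b => lmem (mkl col a b) q) (seq 0 16)) oth) &&
    forallb (fun r => forallb (fun r' => leqb r r' || zp r r') q) q &&
    forallb (fun r => forallb (fun b => lmem (mkl col a b) q ||
                                   match simpw zp z3 [r; p; mkl col a b] with None => true | Some _ => false end)
                               (seq 0 16)) q
  end.

Definition inst_ok zp z3 (i : inst) : bool :=
  match i with
  | IIns _ _ _ a => Nat.ltb a 16
  | IComm _ p q _ col => comm_ok zp z3 p q col
  end.

Definition check zp z3 (target : fsum) (cert : list (Z * inst)) : bool :=
  forallb (fun ci => inst_ok zp z3 (snd ci)) cert &&
  match normF zp z3 (scaleF (-1) target ++ flat_map (fun ci => scaleF (fst ci) (inst_sum (snd ci))) cert) with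
  | [] => true | _ => false end.

Arguments sumA {_ _} _ _ : simpl never.

Lemma sh_vertices_eq : sh_vertices = map vx (seq 0 16).
Proof. reflexivity. Qed.

Section Sums.
Variable A : CStarAlgebra.
Local Infix "+" := cadd.
Local Infix "*" := cmul.

Lemma sumA_nil {V} (f : V -> A) : sumA [] f = cz.
Proof. reflexivity. Qed.

Lemma sumA_cons {V} (v : V) l (f : V -> A) : sumA (v :: l) f = f v + sumA l f.
Proof. reflexivity. Qed.

Lemma sumA_app {V} (l1 l2 : list V) (f : V -> A) : sumA (l1 ++ l2) f = sumA l1 f + sumA l2 f.
Proof.
  induction l1 as [|v l1 IH]; simpl.
  - rewrite cadd_0l. reflexivity.
  - unfold sumA in *. simpl. rewrite IH, cadd_assoc. reflexivity.
Qed.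

Lemma sumA_map {V W} (g : V -> W) l (f : W -> A) : sumA (map g l) f = sumA l (fun v => f (g v)).
Proof. induction l; simpl; auto. unfold sumA in *; simpl; rewrite IHl; reflexivity. Qed.

Lemma sumA_ext {V} l (f g : V -> A) : (forall v, In v l -> f v = g v) -> sumA l f = sumA l g.
Proof.
  induction l as [|v l IH]; intros H; auto. unfold sumA in *; simpl.
  rewrite (H v (or_introl eq_refl)), IH; auto. intros; apply H; right; auto.
Qed.

Lemma sumA_zero {V} l (f : V -> A) : (forall v, In v l -> f v = cz) -> sumA l f = cz.
Proof.
  induction l as [|v l IH]; intros H; auto. unfold sumA in *; simpl.
  rewrite (H v (or_introl eq_refl)), IH, cadd_0l; auto. intros; apply H; right; auto.
Qed.

Lemma sumA_add {V} l (f g : V -> A) : sumA l (fun v => f v + g v) = sumA l f + sumA l g.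
Proof.
  induction l as [|v l IH]; simpl.
  - rewrite cadd_0l; reflexivity.
  - unfold sumA in *; simpl. rewrite IH.
    rewrite !cadd_assoc. f_equal. rewrite <- !cadd_assoc. f_equal. apply cadd_comm.
Qed.

Lemma sumA_mull {V} l (f : V -> A) x : x * sumA l f = sumA l (fun v => x * f v).
Proof.
  induction l as [|v l IH]; simpl.
  - apply cmul_0r.
  - unfold sumA in *; simpl. rewrite cmul_addr, IH. reflexivity.
Qed.

Lemma sumA_mulr {V} l (f : V -> A) x : sumA l f * x = sumA l (fun v => f v * x).
Proof.
  induction l as [|v l IH]; simpl.
  - apply cmul_0l.
  - unfold sumA in *; simpl. rewrite cmul_addl, IH. reflexivity.
Qed.

Lemma sumA_star {V} l (f : V -> A) : cstar (sumA l f) = sumA l (fun v => cstar (f v)).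
Proof.
  induction l as [|v l IH]; simpl.
  - apply cstar_cz.
  - unfold sumA in *; simpl. rewrite cstar_add, IH. reflexivity.
Qed.

Lemma sumA_opp {V} l (f : V -> A) : copp (sumA l f) = sumA l (fun v => copp (f v)).
Proof.
  induction l as [|v l IH]; simpl.
  - apply copp_cz.
  - unfold sumA in *; simpl. rewrite copp_add, IH. reflexivity.
Qed.

Lemma sumA_zmul {V} l (f : V -> A) c : zmul A c (sumA l f) = sumA l (fun v => zmul A c (f v)).
Proof.
  induction l as [|v l IH]; simpl.
  - apply zmul_cz.
  - unfold sumA in *; simpl. rewrite zmul_addr, IH. reflexivity.
Qed.

Lemma sumA_filter {V} (P : V -> bool) l (f : V -> A) :
  (forall v, In v l -> P v = false -> f v = cz) -> sumA l f = sumA (filter P l) f.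
Proof.
  induction l as [|v l IH]; intros H; cbn [filter]; auto.
  destruct (P v) eqn:E.
  - rewrite !sumA_cons. rewrite IH; auto. intros; apply H; auto; right; auto.
  - rewrite sumA_cons, H, cadd_0l; auto. apply IH. intros; apply H; auto; right; auto. left; auto.
Qed.

Lemma sumA_single {V} l (f : V -> A) r :
  NoDup l -> In r l -> (forall v, In v l -> v <> r -> f v = cz) -> sumA l f = f r.
Proof.
  induction l as [|v l IH]; intros ND Hin H; [destruct Hin|].
  inversion ND; subst. rewrite sumA_cons. destruct Hin as [<-|Hin].
  - rewrite sumA_zero, cadd_0r; auto. intros w Hw. apply H. right; auto.
    intros ->. contradiction.
  - rewrite H, cadd_0l. apply IH; auto. intros; apply H; auto. right; auto.
    left; auto. intros ->. contradiction.
Qed.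

Lemma sumA_perm {V} (l1 l2 : list V) (f : V -> A) : Permutation l1 l2 -> sumA l1 f = sumA l2 f.
Proof.
  induction 1; auto.
  - unfold sumA in *; simpl; congruence.
  - unfold sumA; simpl. rewrite !cadd_assoc. f_equal. apply cadd_comm.
  - congruence.
Qed.

Lemma zmul_m1 (x : A) : zmul A (-1) x = copp x.
Proof.
  apply copp_unique. rewrite cadd_comm.
  assert (E : cadd (zmul A (-1) x) (zmul A 1 x) = cz) by (rewrite <- zmul_add; apply zmul_0).
  rewrite zmul_1 in E. exact E.
Qed.

End Sums.

Section Sound.
Variable A : CStarAlgebra.
Variable u : ShV -> ShV -> A.
Hypothesis Hm : magic_unitary_for sh_vertices sh_adj A u.
Local Infix "+" := cadd.
Local Infix "*" := cmul.

Definition U (p : letter) : A := u (vx (fst p)) (vx (snd p)).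
Definition prodw (w : word) : A := fold_right (fun p acc => U p * acc) co w.
Definition evalF (F : fsum) : A := sumA F (fun t => zmul A (fst t) (prodw (snd t))).
Arguments evalF : simpl never.

Lemma U_idem p : U p * U p = U p.
Proof. destruct Hm as [H1 _]. symmetry. apply H1. Qed.

Lemma U_star p : cstar (U p) = U p.
Proof. destruct Hm as [H1 _]. symmetry. apply H1. Qed.

Lemma rowsum a : sumA (seq 0 16) (fun b => U (a, b)) = co.
Proof.
  destruct Hm as [_ [H2 _]]. destruct (H2 (vx a)) as [E _].
  rewrite sh_vertices_eq, sumA_map in E. exact E.
Qed.

Lemma colsum a : sumA (seq 0 16) (fun b => U (b, a)) = co.
Proof.
  destruct Hm as [_ [H2 _]]. destruct (H2 (vx a)) as [_ E].
  rewrite sh_vertices_eq, sumA_map in E. exact E.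
Qed.

Lemma linesum col a : sumA (seq 0 16) (fun b => U (mkl col a b)) = co.
Proof. destruct col; simpl; [apply colsum | apply rowsum]. Qed.

Lemma R3n i j k l : xorb (adjn i k) (adjn j l) = true -> U (i, j) * U (k, l) = cz.
Proof. destruct Hm as [_ [_ H3]]. intros H. apply (H3 (vx i) (vx j) (vx k) (vx l) H). Qed.

Lemma prodw_app v w : prodw (v ++ w) = prodw v * prodw w.
Proof.
  induction v as [|x v IH]; simpl.
  - rewrite cmul_1l; reflexivity.
  - rewrite IH, cmul_assoc; reflexivity.
Qed.

Lemma evalF_app F G : evalF (F ++ G) = evalF F + evalF G.
Proof. apply sumA_app. Qed.

Lemma evalF_scale c F : evalF (scaleF c F) = zmul A c (evalF F).
Proof.
  unfold evalF, scaleF. rewrite sumA_map, sumA_zmul. apply sumA_ext. intros [d w] _; simpl.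
  apply zmul_mul.
Qed.

Lemma evalF_cons c w F : evalF ((c, w) :: F) = zmul A c (prodw w) + evalF F.
Proof. unfold evalF. rewrite sumA_cons. reflexivity. Qed.

Lemma evalF_nil : evalF [] = cz.
Proof. reflexivity. Qed.

Lemma evalF_perm F G : Permutation F G -> evalF F = evalF G.
Proof. apply sumA_perm. Qed.

Lemma evalF_compress c w F : evalF (compress c w F) = zmul A c (prodw w) + evalF F.
Proof.
  revert c w; induction F as [|[c2 w2] F IH]; intros c w; simpl.
  - unfold evalF. rewrite sumA_cons, sumA_nil. reflexivity.
  - destruct (weqb w w2) eqn:E.
    + apply weqb_eq in E; subst. rewrite IH. unfold evalF. rewrite sumA_cons; simpl.
      rewrite zmul_add, cadd_assoc. reflexivity.
    + unfold evalF at 1. rewrite sumA_cons. fold (evalF (compress c2 w2 F)). rewrite IH.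
      unfold evalF. rewrite sumA_cons. reflexivity.
Qed.

Lemma evalF_compress0 F : evalF (compress0 F) = evalF F.
Proof. destruct F as [|[c w] F]; simpl; auto. rewrite evalF_compress. reflexivity. Qed.

Lemma evalF_dropzero F : evalF (dropzero F) = evalF F.
Proof.
  unfold evalF, dropzero. symmetry. apply sumA_filter. intros [c w] _ H; simpl in *.
  destruct (Z.eqb c 0) eqn:E; simpl in H; try discriminate. apply Z.eqb_eq in E; subst.
  apply zmul_0.
Qed.

Lemma prodw_dedup w : prodw (dedup w) = prodw w.
Proof.
  induction w as [|x w IH]; [reflexivity|].
  destruct w as [|y w]; [reflexivity|].
  change (dedup (x :: y :: w)) with
    (if Nat.eqb (fst x) (fst y) && Nat.eqb (snd x) (snd y) then dedup (y :: w) else x :: dedup (y :: w)).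
  destruct (Nat.eqb (fst x) (fst y) && Nat.eqb (snd x) (snd y)) eqn:E.
  - apply andb_prop in E as [E1 E2]. apply Nat.eqb_eq in E1, E2.
    assert (x = y) by (destruct x, y; simpl in *; subst; auto). subst.
    rewrite IH. change (prodw (y :: y :: w)) with (U y * (U y * prodw w)).
    change (prodw (y :: w)) with (U y * prodw w). rewrite cmul_assoc, U_idem. reflexivity.
  - change (prodw (x :: dedup (y :: w))) with (U x * prodw (dedup (y :: w))). rewrite IH. reflexivity.
Qed.

Section WithZ.
Variable zp : letter -> letter -> bool.
Variable z3 : word -> bool.
Hypothesis Hzp : forall x y, zp x y = true -> U x * U y = cz.
Hypothesis Hz3 : forall x y z, z3 [x; y; z] = true -> prodw [x; y; z] = cz.

Lemma haszp_zero w : haszp zp w = true -> prodw w = cz.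
Proof.
  induction w as [|x w IH]; simpl; try discriminate.
  destruct w as [|y w]; try discriminate. intros H. apply orb_prop in H as [H|H].
  - simpl. rewrite cmul_assoc, Hzp, cmul_0l; auto.
  - rewrite IH; auto. apply cmul_0r.
Qed.

Lemma hasz3_zero w : hasz3 z3 w = true -> prodw w = cz.
Proof.
  induction w as [|x w IH]; simpl; try discriminate.
  destruct w as [|y w]; try discriminate. destruct w as [|z w]; try discriminate.
  intros H. apply orb_prop in H as [H|H].
  - apply Hz3 in H. simpl in H |- *. rewrite cmul_1r in H.
    rewrite !cmul_assoc. rewrite <- (cmul_assoc _ (U x)), H, cmul_0l. reflexivity.
  - rewrite IH; auto. apply cmul_0r.
Qed.

Lemma simpw_sound w : match simpw zp z3 w with Some w' => prodw w' = prodw w | None => prodw w = cz end.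
Proof.
  unfold simpw. destruct (haszp zp (dedup w) || hasz3 z3 (dedup w)) eqn:E.
  - rewrite <- prodw_dedup. apply orb_prop in E as [E|E].
    + apply haszp_zero; auto.
    + apply hasz3_zero; auto.
  - apply prodw_dedup.
Qed.

Lemma evalF_simp F : evalF (simpF zp z3 F) = evalF F.
Proof.
  induction F as [|[c w] F IH]; [reflexivity|]. unfold simpF in *. cbn [flat_map].
  rewrite evalF_app, IH, evalF_cons. f_equal.
  pose proof (simpw_sound w) as S. cbn [snd fst].
  destruct (simpw zp z3 w) as [w'|].
  - rewrite evalF_cons, evalF_nil, S, cadd_0r. reflexivity.
  - rewrite evalF_nil, S, zmul_cz. reflexivity.
Qed.

Lemma evalF_norm F : evalF (normF zp z3 F) = evalF F.
Proof.
  unfold normF. rewrite evalF_dropzero, evalF_compress0.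
  rewrite <- (evalF_perm _ _ (TermSort.Permuted_sort _)). apply evalF_simp.
Qed.

Lemma ins_sound w1 w2 col a : evalF (inst_sum (IIns w1 w2 col a)) = cz.
Proof.
  unfold inst_sum, evalF. rewrite sumA_cons. cbn [fst snd]. rewrite zmul_1.
  rewrite sumA_map. cbn [fst snd].
  rewrite (sumA_ext _ _ _ (fun b => copp (prodw w1 * (U (mkl col a b) * prodw w2)))).
  2:{ intros b _. rewrite zmul_m1, prodw_app. reflexivity. }
  rewrite <- sumA_opp, <- sumA_mull, <- sumA_mulr, linesum, cmul_1l, prodw_app.
  apply cadd_oppr.
Qed.

Lemma leqb_eq x y : leqb x y = true <-> x = y.
Proof.
  destruct x, y; unfold leqb; simpl. rewrite andb_true_iff, !Nat.eqb_eq. split.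
  - intros [-> ->]; auto.
  - intros H; inversion H; auto.
Qed.

Lemma lmem_In x l : lmem x l = true <-> In x l.
Proof.
  unfold lmem. rewrite existsb_exists. split.
  - intros [y [Hy E]]. apply leqb_eq in E. subst; auto.
  - intros H. exists x. split; auto. apply leqb_eq. reflexivity.
Qed.

Lemma zmul_1' x : zmul A 1 x = x.
Proof. apply zmul_1. Qed.

Lemma copp_copp (x : A) : copp (copp x) = x.
Proof. symmetry. apply copp_unique. apply cadd_oppl. Qed.

Lemma expand4 (a b c d : A) : (a + copp b) * (c + copp d) = a * c + copp (a * d) + copp (b * c) + b * d.
Proof.
  rewrite cmul_addl, !cmul_addr, !copp_mull, !copp_mulr, copp_copp.
  rewrite !cadd_assoc. reflexivity.
Qed.

Lemma comm_sound p q col : comm_ok zp z3 p q col = true ->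
  U p * sumA q U = sumA q U * U p.
Proof.
  unfold comm_ok. destruct q as [|r0 q0] eqn:Eq; try discriminate.
  rewrite <- Eq. set (a := if col then snd r0 else fst r0).
  set (oth := fun r : letter => if col then fst r else snd r).
  intros H. repeat (apply andb_prop in H as [H ?]).
  rename H into Ha. rename H0 into Hz. rename H1 into Hort. rename H2 into Hfilt.
  rename H3 into Hlt. rename H4 into Hline. rename H5 into Hp.
  assert (Hline' : forall r, In r q -> r = mkl col a (oth r)).
  { intros r Hr. rewrite forallb_forall in Hline. apply leqb_eq. apply Hline; auto. }
  apply nleqb_eq in Hfilt. fold oth in Hfilt.
  assert (ND : NoDup q).
  { apply (NoDup_map_inv oth). change (map oth q) with (map (fun r => if col then fst r else snd r) q).
    rewrite <- Hfilt. apply NoDup_filter, seq_NoDup. }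
  set (S := sumA q U). set (P := U p).
  assert (Ha1 : forall r, In r q -> U r * (P * S) = U r * P).
  { intros r Hr.
    assert (E1 : U r * P = U r * P * co) by (rewrite cmul_1r; reflexivity).
    rewrite E1, <- (linesum col a), sumA_mull.
    rewrite (sumA_filter _ (fun b => lmem (mkl col a b) q)).
    2:{ intros b Hb Hnot. rewrite forallb_forall in Hz. specialize (Hz r Hr).
        rewrite forallb_forall in Hz. specialize (Hz b Hb). rewrite Hnot in Hz. simpl in Hz.
        pose proof (simpw_sound [r; p; mkl col a b]) as S3.
        destruct (simpw zp z3 [r; p; mkl col a b]); try discriminate.
        simpl in S3. rewrite cmul_1r in S3. rewrite <- cmul_assoc. exact S3. }
    rewrite Hfilt, sumA_map. unfold S. rewrite sumA_mull, sumA_mull.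
    apply sumA_ext. intros r' Hr'. change (if col then fst r' else snd r') with (oth r'). rewrite <- (Hline' r' Hr'). rewrite cmul_assoc. reflexivity. }
  assert (HSS : S * S = S).
  { unfold S at 1. rewrite sumA_mulr. apply sumA_ext. intros r Hr.
    unfold S. rewrite sumA_mull. rewrite (sumA_single _ _ _ r); auto.
    - apply U_idem.
    - intros r' Hr' Hne. apply Hzp. rewrite forallb_forall in Hort.
      specialize (Hort r Hr). rewrite forallb_forall in Hort. specialize (Hort r' Hr').
      apply orb_prop in Hort as [E|E]; auto. apply leqb_eq in E. congruence. }
  assert (HSstar : cstar S = S).
  { unfold S. rewrite sumA_star. apply sumA_ext. intros; apply U_star. }
  assert (HPstar : cstar P = P) by apply U_star.
  assert (HPP : P * P = P) by apply U_idem.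
  assert (HSPS : S * (P * S) = S * P).
  { unfold S at 1 3. rewrite !sumA_mulr. apply sumA_ext. intros r Hr. apply Ha1; auto. }
  assert (H5 : P * S * P * S * P = P * S * P).
  { replace (P * S * P * S * P) with (P * (S * (P * S)) * P) by (rewrite !cmul_assoc; reflexivity).
    rewrite HSPS. rewrite <- !cmul_assoc, HPP, !cmul_assoc. reflexivity. }
  set (X := S * P + copp (P * S * P)).
  assert (HXs : cstar X = P * S + copp (P * S * P)).
  { unfold X. rewrite cstar_add, cstar_opp, !cstar_mul, HSstar, HPstar. rewrite cmul_assoc. reflexivity. }
  assert (HXX : cstar X * X = cz).
  { rewrite HXs. unfold X. rewrite expand4.
    assert (E1 : P * S * (S * P) = P * S * P).
    { replace (P * S * (S * P)) with (P * (S * S) * P) by (rewrite !cmul_assoc; reflexivity).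
      rewrite HSS; reflexivity. }
    assert (E2 : P * S * (P * S * P) = P * S * P).
    { transitivity (P * S * P * S * P); [rewrite !cmul_assoc; reflexivity | exact H5]. }
    assert (E3 : P * S * P * (S * P) = P * S * P).
    { transitivity (P * S * P * S * P); [rewrite !cmul_assoc; reflexivity | exact H5]. }
    assert (E4 : P * S * P * (P * S * P) = P * S * P).
    { replace (P * S * P * (P * S * P)) with (P * S * (P * P) * S * P) by (rewrite !cmul_assoc; reflexivity).
      rewrite HPP. exact H5. }
    rewrite E1, E2, E3, E4. rewrite cadd_oppr, cadd_0l, cadd_oppl. reflexivity. }
  apply cstar_zero in HXX. unfold X in HXX. apply sub_eq0 in HXX.
  assert (HPS : P * S = P * S * P).
  { assert (E := f_equal cstar HXX). rewrite !cstar_mul, HSstar, HPstar in E.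
    rewrite cmul_assoc in E. exact E. }
  fold P. fold S. rewrite HPS, HXX. reflexivity.
Qed.

Lemma comm_inst_sound w1 p q w2 col : comm_ok zp z3 p q col = true ->
  evalF (inst_sum (IComm w1 p q w2 col)) = cz.
Proof.
  intros H. apply comm_sound in H.
  assert (E : evalF (inst_sum (IComm w1 p q w2 col)) =
     sumA q (fun r => prodw w1 * (U p * U r) * prodw w2 + copp (prodw w1 * (U r * U p) * prodw w2))).
  { unfold inst_sum. clear H. induction q as [|r q IH].
    - reflexivity.
    - cbn [flat_map]. rewrite evalF_app, IH, sumA_cons. f_equal.
      rewrite !evalF_cons. change (evalF []) with (cz : A).
      rewrite zmul_1, zmul_m1, cadd_0r, !prodw_app.
      change (prodw (p :: r :: w2)) with (U p * (U r * prodw w2)).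
      change (prodw (r :: p :: w2)) with (U r * (U p * prodw w2)).
      rewrite !cmul_assoc. reflexivity. }
  rewrite E, sumA_add, <- sumA_opp.
  assert (EX : sumA q (fun r => prodw w1 * (U p * U r) * prodw w2) = prodw w1 * (U p * sumA q U) * prodw w2).
  { rewrite sumA_mull, sumA_mull, sumA_mulr. reflexivity. }
  assert (EY : sumA q (fun r => prodw w1 * (U r * U p) * prodw w2) = prodw w1 * (sumA q U * U p) * prodw w2).
  { rewrite sumA_mulr, sumA_mull, sumA_mulr. reflexivity. }
  rewrite EX, EY, H. apply cadd_oppr.
Qed.

Definition inst_ok_sound i : inst_ok zp z3 i = true -> evalF (inst_sum i) = cz.
Proof.
  destruct i; cbn [inst_ok]; intros H.
  - apply ins_sound.
  - apply comm_inst_sound; auto.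
Qed.

Lemma check_sound target cert : check zp z3 target cert = true -> evalF target = cz.
Proof.
  unfold check. intros H. apply andb_prop in H as [H1 H2].
  destruct (normF zp z3 _) eqn:E; try discriminate.
  assert (E2 := f_equal evalF E). rewrite evalF_norm, evalF_app, evalF_scale in E2.
  assert (Z : evalF (flat_map (fun ci => scaleF (fst ci) (inst_sum (snd ci))) cert) = cz).
  { clear E E2. induction cert as [|[c i] cert IH]; [reflexivity|].
    simpl in H1. apply andb_prop in H1 as [Hi H1].
    cbn [flat_map]. rewrite evalF_app, IH, evalF_scale, inst_ok_sound, zmul_cz, cadd_0l; auto. }
  rewrite Z, cadd_0r, zmul_m1 in E2. rewrite evalF_nil in E2.
  rewrite <- (copp_copp (evalF target)), E2. apply copp_cz.
Qed.

End WithZ.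
End Sound.

Local Open Scope nat_scope.

Definition idx (x : ShV) : nat := 4 * nat_of_z4 (fst x) + nat_of_z4 (snd x).

Lemma vx_idx x : vx (idx x) = x.
Proof. destruct x as [[] []]; reflexivity. Qed.

Lemma idx_lt x : idx x < 16.
Proof. destruct x as [[] []]; cbv; lia. Qed.

Lemma idx_vx n : n < 16 -> idx (vx n) = n.
Proof.
  intros H. do 16 (destruct n as [|n]; [reflexivity|]). lia.
Qed.

Definition sigS (p : list nat) (x : ShV) : ShV := vx (nth (idx x) p 0).

Definition isaut (p : list nat) : bool :=
  Nat.eqb (length p) 16 &&
  nleqb (NatSort.sort p) (seq 0 16) &&
  forallb (fun a => forallb (fun b => Bool.eqb (adjn (nth a p 0) (nth b p 0)) (adjn a b)) (seq 0 16)) (seq 0 16).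

Lemma map_nth_seq (q : list nat) : map (fun i => nth i q 0) (seq 0 (length q)) = q.
Proof.
  induction q as [|x q IH]; [reflexivity|].
  simpl. f_equal. rewrite <- seq_shift, map_map. simpl. exact IH.
Qed.

Lemma isaut_perm p : isaut p = true -> Permutation p (seq 0 16).
Proof.
  unfold isaut. intros H. apply andb_prop in H as [H _]. apply andb_prop in H as [_ H].
  apply nleqb_eq in H. rewrite <- H. apply NatSort.Permuted_sort.
Qed.

Lemma isaut_len p : isaut p = true -> length p = 16.
Proof.
  unfold isaut. intros H. apply andb_prop in H as [H _]. apply andb_prop in H as [H _].
  apply Nat.eqb_eq; auto.
Qed.

Lemma isaut_adj p x y : isaut p = true -> sh_adj (sigS p x) (sigS p y) = sh_adj x y.
Proof.
  unfold isaut. intros H. apply andb_prop in H as [_ H].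
  rewrite forallb_forall in H. specialize (H (idx x)).
  assert (Hx : In (idx x) (seq 0 16)) by (apply in_seq; pose proof (idx_lt x); lia).
  specialize (H Hx). rewrite forallb_forall in H.
  assert (Hy : In (idx y) (seq 0 16)) by (apply in_seq; pose proof (idx_lt y); lia).
  specialize (H _ Hy). apply Bool.eqb_prop in H. unfold adjn in H. unfold sigS.
  rewrite H, !vx_idx. reflexivity.
Qed.

Lemma sumA_sig {B : CStarAlgebra} p (f : ShV -> B) : isaut p = true ->
  sumA sh_vertices (fun l => f (sigS p l)) = sumA sh_vertices f.
Proof.
  intros H. rewrite sh_vertices_eq, !sumA_map.
  rewrite (sumA_ext _ _ _ (fun n => f (vx (nth n p 0)))).
  2:{ intros n Hn. apply in_seq in Hn. unfold sigS. rewrite idx_vx; auto. lia. }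
  rewrite <- (sumA_map _ (fun n => nth n p 0) (seq 0 16) (fun m => f (vx m))).
  replace (map (fun n => nth n p 0) (seq 0 16)) with p.
  2:{ rewrite <- (isaut_len p H). symmetry. apply map_nth_seq. }
  apply sumA_perm. apply isaut_perm; auto.
Qed.

Lemma transport (B : CStarAlgebra) (u : ShV -> ShV -> B) p q :
  magic_unitary_for sh_vertices sh_adj B u -> isaut p = true -> isaut q = true ->
  magic_unitary_for sh_vertices sh_adj B (fun x y => u (sigS p x) (sigS q y)).
Proof.
  intros [H1 [H2 H3]] Hp Hq. split; [|split].
  - intros i j. apply H1.
  - intros i. split.
    + rewrite (sumA_sig q (fun l => u (sigS p i) l) Hq). apply H2.
    + rewrite (sumA_sig p (fun l => u l (sigS q i)) Hp). apply H2.
  - intros i j k l H. apply H3. rewrite !isaut_adj; auto.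
Qed.

Lemma U_transport (B : CStarAlgebra) (u : ShV -> ShV -> B) p q a b :
  a < 16 -> b < 16 ->
  U B (fun x y => u (sigS p x) (sigS q y)) (a, b) = U B u (nth a p 0, nth b q 0).
Proof.
  intros Ha Hb. unfold U, sigS. simpl. rewrite !idx_vx; auto.
Qed.

Local Open Scope nat_scope.

Definition zp1 (x y : letter) : bool :=
  lt16 x && lt16 y && xorb (adjn (fst x) (fst y)) (adjn (snd x) (snd y)).
Definition nz3 (w : word) : bool := false.

Definition findm (j l : nat) : nat :=
  hd 0 (filter (fun m => negb (Bool.eqb (adjn j m) (adjn l m))) (seq 0 16)).

Definition orth_row_ok i j l : bool :=
  check zp1 nz3 [(1%Z, [(i, j); (i, l)])] [(1%Z, IIns [(i, j)] [(i, l)] true (findm j l))].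
Definition orth_col_ok i j l : bool :=
  check zp1 nz3 [(1%Z, [(j, i); (l, i)])] [(1%Z, IIns [(j, i)] [(l, i)] false (findm j l))].

Definition all16 (P : nat -> bool) : bool := forallb P (seq 0 16).

Lemma all16_spec P : all16 P = true -> forall n, n < 16 -> P n = true.
Proof. unfold all16. rewrite forallb_forall. intros H n Hn. apply H. apply in_seq. lia. Qed.

Lemma orth_all : all16 (fun i => all16 (fun j => all16 (fun l =>
   Nat.eqb j l || (orth_row_ok i j l && orth_col_ok i j l)))) = true.
Proof. vm_compute. reflexivity. Qed.

Definition typ (a b : nat) : nat :=
  if Nat.eqb a b then 0 else if adjn a b then 1 else
  match filter (fun c => adjn a c && adjn c b) (seq 0 16) with
  | [c1; c2] => if adjn c1 c2 then 3 else 2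
  | _ => 2
  end.

Definition mism23 (s t : nat) : bool :=
  (Nat.eqb s 2 && Nat.eqb t 3) || (Nat.eqb s 3 && Nat.eqb t 2).

Definition zpc (x y : letter) : bool :=
  zp1 x y || (lt16 x && lt16 y &&
     ((Nat.eqb (fst x) (fst y) && negb (Nat.eqb (snd x) (snd y))) ||
      (Nat.eqb (snd x) (snd y) && negb (Nat.eqb (fst x) (fst y))))).

Definition zp2 (x y : letter) : bool :=
  lt16 x && lt16 y && negb (Nat.eqb (typ (fst x) (fst y)) (typ (snd x) (snd y))).

Definition cert2 (i j k l : nat) : list (Z * inst) :=
  let a := hd 0 (filter (fun c => adjn i c && adjn c k) (seq 0 16)) in
  let D := filter (fun c => adjn j c && adjn c l) (seq 0 16) in
  let Na := filter (adjn a) (seq 0 16) in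
  let NaC := filter (fun m => adjn a m && adjn i m && adjn m k) (seq 0 16) in
  let eps : Z := if Nat.eqb (typ j l) 3 then 1%Z else 0%Z in
  flat_map (fun b => map (fun t => (1%Z, IIns [(i, j); (a, t)] [(k, l)] true b)) (filter (adjn b) (seq 0 16))) D ++
  flat_map (fun b => map (fun m => ((-1)%Z, IIns [(i, j)] [(m, b); (k, l)] false a)) Na) D ++
  [(eps, IIns [(i, j)] [(k, l)] false a)] ++
  map (fun m => ((-1)%Z, IIns [(i, j)] [(k, l)] false m)) NaC.

Definition coef2 (j l : nat) : Z := if Nat.eqb (typ j l) 3 then 1%Z else (-1)%Z.

Definition st2_ok (k l : nat) : bool :=
  negb (mism23 (typ 0 k) (typ 0 l)) ||
  check zpc nz3 [(coef2 0 l, [(0, 0); (k, l)])] (cert2 0 0 k l).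

Lemma st2_all : all16 (fun k => all16 (fun l => st2_ok k l)) = true.
Proof. vm_compute. reflexivity. Qed.

Definition vadd (a b : nat) : nat := idx (z4_add (fst (vx a)) (fst (vx b)), z4_add (snd (vx a)) (snd (vx b))).
Definition vsub (a b : nat) : nat := idx (z4_add (fst (vx a)) (z4_opp (fst (vx b))), z4_add (snd (vx a)) (z4_opp (snd (vx b)))).
Definition tr (s : nat) : list nat := map (fun n => vadd n s) (seq 0 16).

Lemma tr_all : all16 (fun s => isaut (tr s) && Nat.eqb (nth 0 (tr s) 0) s &&
   all16 (fun k => Nat.eqb (nth (vsub k s) (tr s) 0) k && Nat.eqb (typ 0 (vsub k s)) (typ s k)
                   && Nat.ltb (vsub k s) 16)) = true.
Proof. vm_compute. reflexivity. Qed.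

Lemma zp2_cases : all16 (fun a => all16 (fun b => all16 (fun c => all16 (fun d =>
  negb (zp2 (a, b) (c, d)) || zpc (a, b) (c, d) || mism23 (typ a c) (typ b d))))) = true.
Proof. vm_compute. reflexivity. Qed.

Section St.
Variable A : CStarAlgebra.
Variable u : ShV -> ShV -> A.
Hypothesis Hm : magic_unitary_for sh_vertices sh_adj A u.
Local Infix "*" := cmul.

Lemma zp1_sound x y : zp1 x y = true -> U A u x * U A u y = cz.
Proof.
  unfold zp1. intros H. apply andb_prop in H as [_ H]. destruct x, y. apply R3n; auto.
Qed.

Lemma nz3_sound x y z : nz3 [x; y; z] = true -> prodw A u [x; y; z] = cz.
Proof. discriminate. Qed.

Lemma check_word zp z3 w (c : Z) cert :
  (forall x y, zp x y = true -> U A u x * U A u y = cz) ->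
  (forall x y z, z3 [x; y; z] = true -> prodw A u [x; y; z] = cz) ->
  c <> 0%Z -> check zp z3 [(c, w)] cert = true -> prodw A u w = cz.
Proof.
  intros Hzp Hz3 Hc H. apply (check_sound A u Hm zp z3 Hzp Hz3) in H.
  rewrite evalF_cons, evalF_nil, cadd_0r in H. apply zmul_inj in H; auto.
Qed.

Lemma orth_row i j l : i < 16 -> j < 16 -> l < 16 -> j <> l -> U A u (i, j) * U A u (i, l) = cz.
Proof.
  intros Hi Hj Hl Hne. pose proof orth_all as H.
  apply (all16_spec _ H i) in Hi. apply (all16_spec _ Hi j) in Hj. apply (all16_spec _ Hj l) in Hl.
  apply Nat.eqb_neq in Hne. rewrite Hne in Hl. simpl in Hl. apply andb_prop in Hl as [H1 _].
  apply (check_word _ _ _ _ _ zp1_sound nz3_sound) in H1; [|discriminate].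
  simpl in H1. rewrite cmul_1r in H1. exact H1.
Qed.

Lemma orth_col i j l : i < 16 -> j < 16 -> l < 16 -> j <> l -> U A u (j, i) * U A u (l, i) = cz.
Proof.
  intros Hi Hj Hl Hne. pose proof orth_all as H.
  apply (all16_spec _ H i) in Hi. apply (all16_spec _ Hi j) in Hj. apply (all16_spec _ Hj l) in Hl.
  apply Nat.eqb_neq in Hne. rewrite Hne in Hl. simpl in Hl. apply andb_prop in Hl as [_ H1].
  apply (check_word _ _ _ _ _ zp1_sound nz3_sound) in H1; [|discriminate].
  simpl in H1. rewrite cmul_1r in H1. exact H1.
Qed.

Lemma lt16_spec x : lt16 x = true -> fst x < 16 /\ snd x < 16.
Proof. unfold lt16. rewrite andb_true_iff, !Nat.ltb_lt. auto. Qed.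

Lemma zpc_sound x y : zpc x y = true -> U A u x * U A u y = cz.
Proof.
  unfold zpc. intros H. apply orb_prop in H as [H|H]; [apply zp1_sound; auto|].
  apply andb_prop in H as [H H3]. apply andb_prop in H as [H1 H2].
  apply lt16_spec in H1, H2. destruct x as [a b], y as [c d]; simpl in *.
  apply orb_prop in H3 as [H|H]; apply andb_prop in H as [E N];
    apply Nat.eqb_eq in E; apply negb_true_iff, Nat.eqb_neq in N; subst.
  - apply orth_row; lia.
  - apply orth_col; lia.
Qed.

Lemma st2_base k l : k < 16 -> l < 16 -> mism23 (typ 0 k) (typ 0 l) = true ->
  U A u (0, 0) * U A u (k, l) = cz.
Proof.
  intros Hk Hl Hmm. pose proof st2_all as H.
  apply (all16_spec _ H k) in Hk. apply (all16_spec _ Hk l) in Hl.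
  unfold st2_ok in Hl. rewrite Hmm in Hl. simpl in Hl.
  apply (check_word _ _ _ _ _ zpc_sound nz3_sound) in Hl.
  - simpl in Hl. rewrite cmul_1r in Hl. exact Hl.
  - unfold coef2. destruct (Nat.eqb _ _); discriminate.
Qed.
End St.

Lemma st2_gen (A : CStarAlgebra) u : magic_unitary_for sh_vertices sh_adj A u ->
  forall i j k l, i < 16 -> j < 16 -> k < 16 -> l < 16 -> mism23 (typ i k) (typ j l) = true ->
  cmul (U A u (i, j)) (U A u (k, l)) = cz.
Proof.
  intros Hm i j k l Hi Hj Hk Hl Hmm.
  pose proof tr_all as T.
  pose proof (all16_spec _ T i Hi) as Ti. pose proof (all16_spec _ T j Hj) as Tj.
  apply andb_prop in Ti as [Ti Tik]. apply andb_prop in Ti as [Ti1 Ti2].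
  apply andb_prop in Tj as [Tj Tjl]. apply andb_prop in Tj as [Tj1 Tj2].
  pose proof (all16_spec _ Tik k Hk) as Tk. pose proof (all16_spec _ Tjl l Hl) as Tl.
  apply andb_prop in Tk as [Tk Tk3]. apply andb_prop in Tk as [Tk1 Tk2].
  apply andb_prop in Tl as [Tl Tl3]. apply andb_prop in Tl as [Tl1 Tl2].
  apply Nat.eqb_eq in Ti2, Tj2, Tk1, Tk2, Tl1, Tl2. apply Nat.ltb_lt in Tk3, Tl3.
  pose proof (transport A u (tr i) (tr j) Hm Ti1 Tj1) as Hm'.
  pose proof (st2_base A _ Hm' (vsub k i) (vsub l j) Tk3 Tl3) as E.
  rewrite Tk2, Tl2 in E. specialize (E Hmm).
  rewrite !U_transport in E; try lia.
  rewrite Ti2, Tj2, Tk1, Tl1 in E. exact E.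
Qed.

Lemma zp2_sound (A : CStarAlgebra) u : magic_unitary_for sh_vertices sh_adj A u ->
  forall x y, zp2 x y = true -> cmul (U A u x) (U A u y) = cz.
Proof.
  intros Hm [a b] [c d] H.
  assert (L := H). unfold zp2 in L. apply andb_prop in L as [L _]. apply andb_prop in L as [L1 L2].
  apply lt16_spec in L1, L2. simpl in L1, L2.
  pose proof zp2_cases as Z.
  pose proof (all16_spec _ Z a (proj1 L1)) as Z1. pose proof (all16_spec _ Z1 b (proj2 L1)) as Z2.
  pose proof (all16_spec _ Z2 c (proj1 L2)) as Z3. pose proof (all16_spec _ Z3 d (proj2 L2)) as Z4.
  cbv beta in Z4. rewrite H in Z4. simpl negb in Z4. rewrite orb_false_l in Z4. apply orb_prop in Z4 as [Z4|Z4].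
  - apply zpc_sound; auto.
  - apply st2_gen; auto; lia.
Qed.

Local Open Scope nat_scope.

Definition z3list : list (word * list (Z * inst)) := [
  ([(0, 0); (1, 1); (0, 5)], [((1)%Z, IIns [] [(0, 0); (3, 3); (0, 5)] false 0); ((-1)%Z, IIns [(0, 0); (3, 3)] [(0, 5)] true 1); ((1)%Z, IIns [(0, 0)] [(1, 1); (0, 5)] false 3)]);
  ([(0, 0); (1, 1); (0, 6)], [((1)%Z, IIns [] [(0, 0); (3, 3); (0, 6)] false 0); ((-1)%Z, IIns [(0, 0); (3, 3)] [(0, 6)] true 1); ((1)%Z, IIns [(0, 0)] [(1, 1); (0, 6)] false 3)]);
  ([(0, 0); (1, 1); (0, 12)], [((1)%Z, IIns [] [(0, 0); (3, 3); (0, 12)] false 0); ((-1)%Z, IIns [(0, 0); (3, 3)] [(0, 12)] true 1); ((1)%Z, IIns [(0, 0)] [(1, 1); (0, 12)] false 3)]);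
  ([(0, 0); (1, 1); (0, 13)], [((1)%Z, IIns [] [(0, 0); (3, 3); (0, 13)] false 0); ((-1)%Z, IIns [(0, 0); (3, 3)] [(0, 13)] true 1); ((1)%Z, IIns [(0, 0)] [(1, 1); (0, 13)] false 3)]);
  ([(0, 0); (1, 5); (0, 1)], [((1)%Z, IIns [] [(0, 0); (3, 15); (0, 1)] false 0); ((-1)%Z, IIns [(0, 0); (3, 15)] [(0, 1)] true 5); ((1)%Z, IIns [(0, 0)] [(1, 5); (0, 1)] false 3)]);
  ([(0, 0); (1, 5); (0, 4)], [((1)%Z, IIns [] [(0, 0); (3, 15); (0, 4)] false 0); ((-1)%Z, IIns [(0, 0); (3, 15)] [(0, 4)] true 5); ((1)%Z, IIns [(0, 0)] [(1, 5); (0, 4)] false 3)]);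
  ([(0, 0); (1, 5); (0, 6)], [((1)%Z, IIns [] [(0, 0); (3, 15); (0, 6)] false 0); ((-1)%Z, IIns [(0, 0); (3, 15)] [(0, 6)] true 5); ((1)%Z, IIns [(0, 0)] [(1, 5); (0, 6)] false 3)]);
  ([(0, 0); (1, 5); (0, 9)], [((1)%Z, IIns [] [(0, 0); (3, 15); (0, 9)] false 0); ((-1)%Z, IIns [(0, 0); (3, 15)] [(0, 9)] true 5); ((1)%Z, IIns [(0, 0)] [(1, 5); (0, 9)] false 3)]);
  ([(0, 2); (1, 1); (0, 5)], [((1)%Z, IIns [] [(0, 2); (3, 3); (0, 5)] false 0); ((-1)%Z, IIns [(0, 2); (3, 3)] [(0, 5)] true 1); ((1)%Z, IIns [(0, 2)] [(1, 1); (0, 5)] false 3)]);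
  ([(0, 2); (1, 1); (0, 6)], [((1)%Z, IIns [] [(0, 2); (3, 3); (0, 6)] false 0); ((-1)%Z, IIns [(0, 2); (3, 3)] [(0, 6)] true 1); ((1)%Z, IIns [(0, 2)] [(1, 1); (0, 6)] false 3)]);
  ([(0, 2); (1, 1); (0, 12)], [((1)%Z, IIns [] [(0, 2); (3, 3); (0, 12)] false 0); ((-1)%Z, IIns [(0, 2); (3, 3)] [(0, 12)] true 1); ((1)%Z, IIns [(0, 2)] [(1, 1); (0, 12)] false 3)]);
  ([(0, 2); (1, 1); (0, 13)], [((1)%Z, IIns [] [(0, 2); (3, 3); (0, 13)] false 0); ((-1)%Z, IIns [(0, 2); (3, 3)] [(0, 13)] true 1); ((1)%Z, IIns [(0, 2)] [(1, 1); (0, 13)] false 3)]);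
  ([(0, 10); (1, 5); (0, 1)], [((1)%Z, IIns [] [(0, 10); (3, 15); (0, 1)] false 0); ((-1)%Z, IIns [(0, 10); (3, 15)] [(0, 1)] true 5); ((1)%Z, IIns [(0, 10)] [(1, 5); (0, 1)] false 3)]);
  ([(0, 10); (1, 5); (0, 4)], [((1)%Z, IIns [] [(0, 10); (3, 15); (0, 4)] false 0); ((-1)%Z, IIns [(0, 10); (3, 15)] [(0, 4)] true 5); ((1)%Z, IIns [(0, 10)] [(1, 5); (0, 4)] false 3)]);
  ([(0, 10); (1, 5); (0, 6)], [((1)%Z, IIns [] [(0, 10); (3, 15); (0, 6)] false 0); ((-1)%Z, IIns [(0, 10); (3, 15)] [(0, 6)] true 5); ((1)%Z, IIns [(0, 10)] [(1, 5); (0, 6)] false 3)]);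
  ([(0, 10); (1, 5); (0, 9)], [((1)%Z, IIns [] [(0, 10); (3, 15); (0, 9)] false 0); ((-1)%Z, IIns [(0, 10); (3, 15)] [(0, 9)] true 5); ((1)%Z, IIns [(0, 10)] [(1, 5); (0, 9)] false 3)]);
  ([(1, 1); (0, 0); (1, 4)], [((1)%Z, IIns [] [(1, 1); (2, 2); (1, 4)] false 0); ((-1)%Z, IIns [(1, 1); (2, 2)] [(1, 4)] true 0); ((1)%Z, IIns [(1, 1)] [(0, 0); (1, 4)] false 2)]);
  ([(1, 1); (0, 0); (1, 5)], [((1)%Z, IIns [] [(1, 1); (2, 2); (1, 5)] false 0); ((-1)%Z, IIns [(1, 1); (2, 2)] [(1, 5)] true 0); ((1)%Z, IIns [(1, 1)] [(0, 0); (1, 5)] false 2)]);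
  ([(1, 1); (0, 0); (1, 12)], [((1)%Z, IIns [] [(1, 1); (2, 2); (1, 12)] false 0); ((-1)%Z, IIns [(1, 1); (2, 2)] [(1, 12)] true 0); ((1)%Z, IIns [(1, 1)] [(0, 0); (1, 12)] false 2)]);
  ([(1, 1); (0, 0); (1, 15)], [((1)%Z, IIns [] [(1, 1); (2, 2); (1, 15)] false 0); ((-1)%Z, IIns [(1, 1); (2, 2)] [(1, 15)] true 0); ((1)%Z, IIns [(1, 1)] [(0, 0); (1, 15)] false 2)]);
  ([(1, 1); (0, 2); (1, 6)], [((1)%Z, IIns [] [(1, 1); (2, 0); (1, 6)] false 0); ((-1)%Z, IIns [(1, 1); (2, 0)] [(1, 6)] true 2); ((1)%Z, IIns [(1, 1)] [(0, 2); (1, 6)] false 2)]);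
  ([(1, 1); (0, 2); (1, 7)], [((1)%Z, IIns [] [(1, 1); (2, 0); (1, 7)] false 0); ((-1)%Z, IIns [(1, 1); (2, 0)] [(1, 7)] true 2); ((1)%Z, IIns [(1, 1)] [(0, 2); (1, 7)] false 2)]);
  ([(1, 1); (0, 2); (1, 13)], [((1)%Z, IIns [] [(1, 1); (2, 0); (1, 13)] false 0); ((-1)%Z, IIns [(1, 1); (2, 0)] [(1, 13)] true 2); ((1)%Z, IIns [(1, 1)] [(0, 2); (1, 13)] false 2)]);
  ([(1, 1); (0, 2); (1, 14)], [((1)%Z, IIns [] [(1, 1); (2, 0); (1, 14)] false 0); ((-1)%Z, IIns [(1, 1); (2, 0)] [(1, 14)] true 2); ((1)%Z, IIns [(1, 1)] [(0, 2); (1, 14)] false 2)]);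
  ([(1, 3); (0, 0); (1, 4)], [((1)%Z, IIns [] [(1, 3); (2, 2); (1, 4)] false 0); ((-1)%Z, IIns [(1, 3); (2, 2)] [(1, 4)] true 0); ((1)%Z, IIns [(1, 3)] [(0, 0); (1, 4)] false 2)]);
  ([(1, 3); (0, 0); (1, 5)], [((1)%Z, IIns [] [(1, 3); (2, 2); (1, 5)] false 0); ((-1)%Z, IIns [(1, 3); (2, 2)] [(1, 5)] true 0); ((1)%Z, IIns [(1, 3)] [(0, 0); (1, 5)] false 2)]);
  ([(1, 3); (0, 0); (1, 12)], [((1)%Z, IIns [] [(1, 3); (2, 2); (1, 12)] false 0); ((-1)%Z, IIns [(1, 3); (2, 2)] [(1, 12)] true 0); ((1)%Z, IIns [(1, 3)] [(0, 0); (1, 12)] false 2)]);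
  ([(1, 3); (0, 0); (1, 15)], [((1)%Z, IIns [] [(1, 3); (2, 2); (1, 15)] false 0); ((-1)%Z, IIns [(1, 3); (2, 2)] [(1, 15)] true 0); ((1)%Z, IIns [(1, 3)] [(0, 0); (1, 15)] false 2)]);
  ([(1, 3); (0, 2); (1, 6)], [((1)%Z, IIns [] [(1, 3); (2, 0); (1, 6)] false 0); ((-1)%Z, IIns [(1, 3); (2, 0)] [(1, 6)] true 2); ((1)%Z, IIns [(1, 3)] [(0, 2); (1, 6)] false 2)]);
  ([(1, 3); (0, 2); (1, 7)], [((1)%Z, IIns [] [(1, 3); (2, 0); (1, 7)] false 0); ((-1)%Z, IIns [(1, 3); (2, 0)] [(1, 7)] true 2); ((1)%Z, IIns [(1, 3)] [(0, 2); (1, 7)] false 2)]);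
  ([(1, 3); (0, 2); (1, 13)], [((1)%Z, IIns [] [(1, 3); (2, 0); (1, 13)] false 0); ((-1)%Z, IIns [(1, 3); (2, 0)] [(1, 13)] true 2); ((1)%Z, IIns [(1, 3)] [(0, 2); (1, 13)] false 2)]);
  ([(1, 3); (0, 2); (1, 14)], [((1)%Z, IIns [] [(1, 3); (2, 0); (1, 14)] false 0); ((-1)%Z, IIns [(1, 3); (2, 0)] [(1, 14)] true 2); ((1)%Z, IIns [(1, 3)] [(0, 2); (1, 14)] false 2)]);
  ([(1, 5); (0, 0); (1, 1)], [((1)%Z, IIns [] [(1, 5); (2, 10); (1, 1)] false 0); ((-1)%Z, IIns [(1, 5); (2, 10)] [(1, 1)] true 0); ((1)%Z, IIns [(1, 5)] [(0, 0); (1, 1)] false 2)]);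
  ([(1, 5); (0, 0); (1, 3)], [((1)%Z, IIns [] [(1, 5); (2, 10); (1, 3)] false 0); ((-1)%Z, IIns [(1, 5); (2, 10)] [(1, 3)] true 0); ((1)%Z, IIns [(1, 5)] [(0, 0); (1, 3)] false 2)]);
  ([(1, 5); (0, 0); (1, 4)], [((1)%Z, IIns [] [(1, 5); (2, 10); (1, 4)] false 0); ((-1)%Z, IIns [(1, 5); (2, 10)] [(1, 4)] true 0); ((1)%Z, IIns [(1, 5)] [(0, 0); (1, 4)] false 2)]);
  ([(1, 5); (0, 0); (1, 12)], [((1)%Z, IIns [] [(1, 5); (2, 10); (1, 12)] false 0); ((-1)%Z, IIns [(1, 5); (2, 10)] [(1, 12)] true 0); ((1)%Z, IIns [(1, 5)] [(0, 0); (1, 12)] false 2)]);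
  ([(1, 5); (0, 1); (1, 0)], [((1)%Z, IIns [] [(1, 5); (2, 9); (1, 0)] false 0); ((-1)%Z, IIns [(1, 5); (2, 9)] [(1, 0)] true 1); ((1)%Z, IIns [(1, 5)] [(0, 1); (1, 0)] false 2)]);
  ([(1, 5); (0, 1); (1, 2)], [((1)%Z, IIns [] [(1, 5); (2, 9); (1, 2)] false 0); ((-1)%Z, IIns [(1, 5); (2, 9)] [(1, 2)] true 1); ((1)%Z, IIns [(1, 5)] [(0, 1); (1, 2)] false 2)]);
  ([(1, 5); (0, 1); (1, 6)], [((1)%Z, IIns [] [(1, 5); (2, 9); (1, 6)] false 0); ((-1)%Z, IIns [(1, 5); (2, 9)] [(1, 6)] true 1); ((1)%Z, IIns [(1, 5)] [(0, 1); (1, 6)] false 2)]);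
  ([(1, 5); (0, 1); (1, 12)], [((1)%Z, IIns [] [(1, 5); (2, 9); (1, 12)] false 0); ((-1)%Z, IIns [(1, 5); (2, 9)] [(1, 12)] true 1); ((1)%Z, IIns [(1, 5)] [(0, 1); (1, 12)] false 2)]);
  ([(1, 5); (0, 4); (1, 0)], [((1)%Z, IIns [] [(1, 5); (2, 6); (1, 0)] false 0); ((-1)%Z, IIns [(1, 5); (2, 6)] [(1, 0)] true 4); ((1)%Z, IIns [(1, 5)] [(0, 4); (1, 0)] false 2)]);
  ([(1, 5); (0, 4); (1, 3)], [((1)%Z, IIns [] [(1, 5); (2, 6); (1, 3)] false 0); ((-1)%Z, IIns [(1, 5); (2, 6)] [(1, 3)] true 4); ((1)%Z, IIns [(1, 5)] [(0, 4); (1, 3)] false 2)]);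
  ([(1, 5); (0, 4); (1, 8)], [((1)%Z, IIns [] [(1, 5); (2, 6); (1, 8)] false 0); ((-1)%Z, IIns [(1, 5); (2, 6)] [(1, 8)] true 4); ((1)%Z, IIns [(1, 5)] [(0, 4); (1, 8)] false 2)]);
  ([(1, 5); (0, 4); (1, 9)], [((1)%Z, IIns [] [(1, 5); (2, 6); (1, 9)] false 0); ((-1)%Z, IIns [(1, 5); (2, 6)] [(1, 9)] true 4); ((1)%Z, IIns [(1, 5)] [(0, 4); (1, 9)] false 2)]);
  ([(1, 5); (0, 6); (1, 1)], [((1)%Z, IIns [] [(1, 5); (2, 4); (1, 1)] false 0); ((-1)%Z, IIns [(1, 5); (2, 4)] [(1, 1)] true 6); ((1)%Z, IIns [(1, 5)] [(0, 6); (1, 1)] false 2)]);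
  ([(1, 5); (0, 6); (1, 2)], [((1)%Z, IIns [] [(1, 5); (2, 4); (1, 2)] false 0); ((-1)%Z, IIns [(1, 5); (2, 4)] [(1, 2)] true 6); ((1)%Z, IIns [(1, 5)] [(0, 6); (1, 2)] false 2)]);
  ([(1, 5); (0, 6); (1, 10)], [((1)%Z, IIns [] [(1, 5); (2, 4); (1, 10)] false 0); ((-1)%Z, IIns [(1, 5); (2, 4)] [(1, 10)] true 6); ((1)%Z, IIns [(1, 5)] [(0, 6); (1, 10)] false 2)]);
  ([(1, 5); (0, 6); (1, 11)], [((1)%Z, IIns [] [(1, 5); (2, 4); (1, 11)] false 0); ((-1)%Z, IIns [(1, 5); (2, 4)] [(1, 11)] true 6); ((1)%Z, IIns [(1, 5)] [(0, 6); (1, 11)] false 2)]);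
  ([(1, 5); (0, 9); (1, 4)], [((1)%Z, IIns [] [(1, 5); (2, 1); (1, 4)] false 0); ((-1)%Z, IIns [(1, 5); (2, 1)] [(1, 4)] true 9); ((1)%Z, IIns [(1, 5)] [(0, 9); (1, 4)] false 2)]);
  ([(1, 5); (0, 9); (1, 8)], [((1)%Z, IIns [] [(1, 5); (2, 1); (1, 8)] false 0); ((-1)%Z, IIns [(1, 5); (2, 1)] [(1, 8)] true 9); ((1)%Z, IIns [(1, 5)] [(0, 9); (1, 8)] false 2)]);
  ([(1, 5); (0, 9); (1, 10)], [((1)%Z, IIns [] [(1, 5); (2, 1); (1, 10)] false 0); ((-1)%Z, IIns [(1, 5); (2, 1)] [(1, 10)] true 9); ((1)%Z, IIns [(1, 5)] [(0, 9); (1, 10)] false 2)]);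
  ([(1, 5); (0, 9); (1, 14)], [((1)%Z, IIns [] [(1, 5); (2, 1); (1, 14)] false 0); ((-1)%Z, IIns [(1, 5); (2, 1)] [(1, 14)] true 9); ((1)%Z, IIns [(1, 5)] [(0, 9); (1, 14)] false 2)]);
  ([(1, 5); (0, 10); (1, 6)], [((1)%Z, IIns [] [(1, 5); (2, 0); (1, 6)] false 0); ((-1)%Z, IIns [(1, 5); (2, 0)] [(1, 6)] true 10); ((1)%Z, IIns [(1, 5)] [(0, 10); (1, 6)] false 2)]);
  ([(1, 5); (0, 10); (1, 9)], [((1)%Z, IIns [] [(1, 5); (2, 0); (1, 9)] false 0); ((-1)%Z, IIns [(1, 5); (2, 0)] [(1, 9)] true 10); ((1)%Z, IIns [(1, 5)] [(0, 10); (1, 9)] false 2)]);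
  ([(1, 5); (0, 10); (1, 11)], [((1)%Z, IIns [] [(1, 5); (2, 0); (1, 11)] false 0); ((-1)%Z, IIns [(1, 5); (2, 0)] [(1, 11)] true 10); ((1)%Z, IIns [(1, 5)] [(0, 10); (1, 11)] false 2)]);
  ([(1, 5); (0, 10); (1, 14)], [((1)%Z, IIns [] [(1, 5); (2, 0); (1, 14)] false 0); ((-1)%Z, IIns [(1, 5); (2, 0)] [(1, 14)] true 10); ((1)%Z, IIns [(1, 5)] [(0, 10); (1, 14)] false 2)]);
  ([(1, 7); (0, 4); (1, 0)], [((1)%Z, IIns [] [(1, 7); (2, 6); (1, 0)] false 0); ((-1)%Z, IIns [(1, 7); (2, 6)] [(1, 0)] true 4); ((1)%Z, IIns [(1, 7)] [(0, 4); (1, 0)] false 2)]);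
  ([(1, 7); (0, 4); (1, 3)], [((1)%Z, IIns [] [(1, 7); (2, 6); (1, 3)] false 0); ((-1)%Z, IIns [(1, 7); (2, 6)] [(1, 3)] true 4); ((1)%Z, IIns [(1, 7)] [(0, 4); (1, 3)] false 2)]);
  ([(1, 7); (0, 4); (1, 8)], [((1)%Z, IIns [] [(1, 7); (2, 6); (1, 8)] false 0); ((-1)%Z, IIns [(1, 7); (2, 6)] [(1, 8)] true 4); ((1)%Z, IIns [(1, 7)] [(0, 4); (1, 8)] false 2)]);
  ([(1, 7); (0, 4); (1, 9)], [((1)%Z, IIns [] [(1, 7); (2, 6); (1, 9)] false 0); ((-1)%Z, IIns [(1, 7); (2, 6)] [(1, 9)] true 4); ((1)%Z, IIns [(1, 7)] [(0, 4); (1, 9)] false 2)]);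
  ([(1, 7); (0, 6); (1, 1)], [((1)%Z, IIns [] [(1, 7); (2, 4); (1, 1)] false 0); ((-1)%Z, IIns [(1, 7); (2, 4)] [(1, 1)] true 6); ((1)%Z, IIns [(1, 7)] [(0, 6); (1, 1)] false 2)]);
  ([(1, 7); (0, 6); (1, 2)], [((1)%Z, IIns [] [(1, 7); (2, 4); (1, 2)] false 0); ((-1)%Z, IIns [(1, 7); (2, 4)] [(1, 2)] true 6); ((1)%Z, IIns [(1, 7)] [(0, 6); (1, 2)] false 2)]);
  ([(1, 7); (0, 6); (1, 10)], [((1)%Z, IIns [] [(1, 7); (2, 4); (1, 10)] false 0); ((-1)%Z, IIns [(1, 7); (2, 4)] [(1, 10)] true 6); ((1)%Z, IIns [(1, 7)] [(0, 6); (1, 10)] false 2)]);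
  ([(1, 7); (0, 6); (1, 11)], [((1)%Z, IIns [] [(1, 7); (2, 4); (1, 11)] false 0); ((-1)%Z, IIns [(1, 7); (2, 4)] [(1, 11)] true 6); ((1)%Z, IIns [(1, 7)] [(0, 6); (1, 11)] false 2)]);
  ([(1, 13); (0, 1); (1, 0)], [((1)%Z, IIns [] [(1, 13); (2, 9); (1, 0)] false 0); ((-1)%Z, IIns [(1, 13); (2, 9)] [(1, 0)] true 1); ((1)%Z, IIns [(1, 13)] [(0, 1); (1, 0)] false 2)]);
  ([(1, 13); (0, 1); (1, 2)], [((1)%Z, IIns [] [(1, 13); (2, 9); (1, 2)] false 0); ((-1)%Z, IIns [(1, 13); (2, 9)] [(1, 2)] true 1); ((1)%Z, IIns [(1, 13)] [(0, 1); (1, 2)] false 2)]);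
  ([(1, 13); (0, 1); (1, 6)], [((1)%Z, IIns [] [(1, 13); (2, 9); (1, 6)] false 0); ((-1)%Z, IIns [(1, 13); (2, 9)] [(1, 6)] true 1); ((1)%Z, IIns [(1, 13)] [(0, 1); (1, 6)] false 2)]);
  ([(1, 13); (0, 1); (1, 12)], [((1)%Z, IIns [] [(1, 13); (2, 9); (1, 12)] false 0); ((-1)%Z, IIns [(1, 13); (2, 9)] [(1, 12)] true 1); ((1)%Z, IIns [(1, 13)] [(0, 1); (1, 12)] false 2)]);
  ([(1, 13); (0, 9); (1, 4)], [((1)%Z, IIns [] [(1, 13); (2, 1); (1, 4)] false 0); ((-1)%Z, IIns [(1, 13); (2, 1)] [(1, 4)] true 9); ((1)%Z, IIns [(1, 13)] [(0, 9); (1, 4)] false 2)]);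
  ([(1, 13); (0, 9); (1, 8)], [((1)%Z, IIns [] [(1, 13); (2, 1); (1, 8)] false 0); ((-1)%Z, IIns [(1, 13); (2, 1)] [(1, 8)] true 9); ((1)%Z, IIns [(1, 13)] [(0, 9); (1, 8)] false 2)]);
  ([(1, 13); (0, 9); (1, 10)], [((1)%Z, IIns [] [(1, 13); (2, 1); (1, 10)] false 0); ((-1)%Z, IIns [(1, 13); (2, 1)] [(1, 10)] true 9); ((1)%Z, IIns [(1, 13)] [(0, 9); (1, 10)] false 2)]);
  ([(1, 13); (0, 9); (1, 14)], [((1)%Z, IIns [] [(1, 13); (2, 1); (1, 14)] false 0); ((-1)%Z, IIns [(1, 13); (2, 1)] [(1, 14)] true 9); ((1)%Z, IIns [(1, 13)] [(0, 9); (1, 14)] false 2)]);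
  ([(1, 15); (0, 0); (1, 1)], [((1)%Z, IIns [] [(1, 15); (2, 10); (1, 1)] false 0); ((-1)%Z, IIns [(1, 15); (2, 10)] [(1, 1)] true 0); ((1)%Z, IIns [(1, 15)] [(0, 0); (1, 1)] false 2)]);
  ([(1, 15); (0, 0); (1, 3)], [((1)%Z, IIns [] [(1, 15); (2, 10); (1, 3)] false 0); ((-1)%Z, IIns [(1, 15); (2, 10)] [(1, 3)] true 0); ((1)%Z, IIns [(1, 15)] [(0, 0); (1, 3)] false 2)]);
  ([(1, 15); (0, 0); (1, 4)], [((1)%Z, IIns [] [(1, 15); (2, 10); (1, 4)] false 0); ((-1)%Z, IIns [(1, 15); (2, 10)] [(1, 4)] true 0); ((1)%Z, IIns [(1, 15)] [(0, 0); (1, 4)] false 2)]);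
  ([(1, 15); (0, 0); (1, 12)], [((1)%Z, IIns [] [(1, 15); (2, 10); (1, 12)] false 0); ((-1)%Z, IIns [(1, 15); (2, 10)] [(1, 12)] true 0); ((1)%Z, IIns [(1, 15)] [(0, 0); (1, 12)] false 2)]);
  ([(1, 15); (0, 10); (1, 6)], [((1)%Z, IIns [] [(1, 15); (2, 0); (1, 6)] false 0); ((-1)%Z, IIns [(1, 15); (2, 0)] [(1, 6)] true 10); ((1)%Z, IIns [(1, 15)] [(0, 10); (1, 6)] false 2)]);
  ([(1, 15); (0, 10); (1, 9)], [((1)%Z, IIns [] [(1, 15); (2, 0); (1, 9)] false 0); ((-1)%Z, IIns [(1, 15); (2, 0)] [(1, 9)] true 10); ((1)%Z, IIns [(1, 15)] [(0, 10); (1, 9)] false 2)]);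
  ([(1, 15); (0, 10); (1, 11)], [((1)%Z, IIns [] [(1, 15); (2, 0); (1, 11)] false 0); ((-1)%Z, IIns [(1, 15); (2, 0)] [(1, 11)] true 10); ((1)%Z, IIns [(1, 15)] [(0, 10); (1, 11)] false 2)]);
  ([(1, 15); (0, 10); (1, 14)], [((1)%Z, IIns [] [(1, 15); (2, 0); (1, 14)] false 0); ((-1)%Z, IIns [(1, 15); (2, 0)] [(1, 14)] true 10); ((1)%Z, IIns [(1, 15)] [(0, 10); (1, 14)] false 2)]);
  ([(5, 0); (1, 1); (5, 5)], [((1)%Z, IIns [] [(5, 0); (9, 3); (5, 5)] false 0); ((-1)%Z, IIns [(5, 0); (9, 3)] [(5, 5)] true 1); ((1)%Z, IIns [(5, 0)] [(1, 1); (5, 5)] false 9)]);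
  ([(5, 0); (1, 1); (5, 6)], [((1)%Z, IIns [] [(5, 0); (9, 3); (5, 6)] false 0); ((-1)%Z, IIns [(5, 0); (9, 3)] [(5, 6)] true 1); ((1)%Z, IIns [(5, 0)] [(1, 1); (5, 6)] false 9)]);
  ([(5, 0); (1, 1); (5, 12)], [((1)%Z, IIns [] [(5, 0); (9, 3); (5, 12)] false 0); ((-1)%Z, IIns [(5, 0); (9, 3)] [(5, 12)] true 1); ((1)%Z, IIns [(5, 0)] [(1, 1); (5, 12)] false 9)]);
  ([(5, 0); (1, 1); (5, 13)], [((1)%Z, IIns [] [(5, 0); (9, 3); (5, 13)] false 0); ((-1)%Z, IIns [(5, 0); (9, 3)] [(5, 13)] true 1); ((1)%Z, IIns [(5, 0)] [(1, 1); (5, 13)] false 9)]);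
  ([(5, 0); (1, 5); (5, 1)], [((1)%Z, IIns [] [(5, 0); (9, 15); (5, 1)] false 0); ((-1)%Z, IIns [(5, 0); (9, 15)] [(5, 1)] true 5); ((1)%Z, IIns [(5, 0)] [(1, 5); (5, 1)] false 9)]);
  ([(5, 0); (1, 5); (5, 4)], [((1)%Z, IIns [] [(5, 0); (9, 15); (5, 4)] false 0); ((-1)%Z, IIns [(5, 0); (9, 15)] [(5, 4)] true 5); ((1)%Z, IIns [(5, 0)] [(1, 5); (5, 4)] false 9)]);
  ([(5, 0); (1, 5); (5, 6)], [((1)%Z, IIns [] [(5, 0); (9, 15); (5, 6)] false 0); ((-1)%Z, IIns [(5, 0); (9, 15)] [(5, 6)] true 5); ((1)%Z, IIns [(5, 0)] [(1, 5); (5, 6)] false 9)]);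
  ([(5, 0); (1, 5); (5, 9)], [((1)%Z, IIns [] [(5, 0); (9, 15); (5, 9)] false 0); ((-1)%Z, IIns [(5, 0); (9, 15)] [(5, 9)] true 5); ((1)%Z, IIns [(5, 0)] [(1, 5); (5, 9)] false 9)]);
  ([(5, 1); (0, 0); (5, 4)], [((1)%Z, IIns [] [(5, 1); (10, 2); (5, 4)] false 0); ((-1)%Z, IIns [(5, 1); (10, 2)] [(5, 4)] true 0); ((1)%Z, IIns [(5, 1)] [(0, 0); (5, 4)] false 10)]);
  ([(5, 1); (0, 0); (5, 5)], [((1)%Z, IIns [] [(5, 1); (10, 2); (5, 5)] false 0); ((-1)%Z, IIns [(5, 1); (10, 2)] [(5, 5)] true 0); ((1)%Z, IIns [(5, 1)] [(0, 0); (5, 5)] false 10)]);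
  ([(5, 1); (0, 0); (5, 12)], [((1)%Z, IIns [] [(5, 1); (10, 2); (5, 12)] false 0); ((-1)%Z, IIns [(5, 1); (10, 2)] [(5, 12)] true 0); ((1)%Z, IIns [(5, 1)] [(0, 0); (5, 12)] false 10)]);
  ([(5, 1); (0, 0); (5, 15)], [((1)%Z, IIns [] [(5, 1); (10, 2); (5, 15)] false 0); ((-1)%Z, IIns [(5, 1); (10, 2)] [(5, 15)] true 0); ((1)%Z, IIns [(5, 1)] [(0, 0); (5, 15)] false 10)]);
  ([(5, 1); (0, 2); (5, 6)], [((1)%Z, IIns [] [(5, 1); (10, 0); (5, 6)] false 0); ((-1)%Z, IIns [(5, 1); (10, 0)] [(5, 6)] true 2); ((1)%Z, IIns [(5, 1)] [(0, 2); (5, 6)] false 10)]);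
  ([(5, 1); (0, 2); (5, 7)], [((1)%Z, IIns [] [(5, 1); (10, 0); (5, 7)] false 0); ((-1)%Z, IIns [(5, 1); (10, 0)] [(5, 7)] true 2); ((1)%Z, IIns [(5, 1)] [(0, 2); (5, 7)] false 10)]);
  ([(5, 1); (0, 2); (5, 13)], [((1)%Z, IIns [] [(5, 1); (10, 0); (5, 13)] false 0); ((-1)%Z, IIns [(5, 1); (10, 0)] [(5, 13)] true 2); ((1)%Z, IIns [(5, 1)] [(0, 2); (5, 13)] false 10)]);
  ([(5, 1); (0, 2); (5, 14)], [((1)%Z, IIns [] [(5, 1); (10, 0); (5, 14)] false 0); ((-1)%Z, IIns [(5, 1); (10, 0)] [(5, 14)] true 2); ((1)%Z, IIns [(5, 1)] [(0, 2); (5, 14)] false 10)]);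
  ([(5, 2); (1, 1); (5, 5)], [((1)%Z, IIns [] [(5, 2); (9, 3); (5, 5)] false 0); ((-1)%Z, IIns [(5, 2); (9, 3)] [(5, 5)] true 1); ((1)%Z, IIns [(5, 2)] [(1, 1); (5, 5)] false 9)]);
  ([(5, 2); (1, 1); (5, 6)], [((1)%Z, IIns [] [(5, 2); (9, 3); (5, 6)] false 0); ((-1)%Z, IIns [(5, 2); (9, 3)] [(5, 6)] true 1); ((1)%Z, IIns [(5, 2)] [(1, 1); (5, 6)] false 9)]);
  ([(5, 2); (1, 1); (5, 12)], [((1)%Z, IIns [] [(5, 2); (9, 3); (5, 12)] false 0); ((-1)%Z, IIns [(5, 2); (9, 3)] [(5, 12)] true 1); ((1)%Z, IIns [(5, 2)] [(1, 1); (5, 12)] false 9)]);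
  ([(5, 2); (1, 1); (5, 13)], [((1)%Z, IIns [] [(5, 2); (9, 3); (5, 13)] false 0); ((-1)%Z, IIns [(5, 2); (9, 3)] [(5, 13)] true 1); ((1)%Z, IIns [(5, 2)] [(1, 1); (5, 13)] false 9)]);
  ([(5, 3); (0, 0); (5, 4)], [((1)%Z, IIns [] [(5, 3); (10, 2); (5, 4)] false 0); ((-1)%Z, IIns [(5, 3); (10, 2)] [(5, 4)] true 0); ((1)%Z, IIns [(5, 3)] [(0, 0); (5, 4)] false 10)]);
  ([(5, 3); (0, 0); (5, 5)], [((1)%Z, IIns [] [(5, 3); (10, 2); (5, 5)] false 0); ((-1)%Z, IIns [(5, 3); (10, 2)] [(5, 5)] true 0); ((1)%Z, IIns [(5, 3)] [(0, 0); (5, 5)] false 10)]);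
  ([(5, 3); (0, 0); (5, 12)], [((1)%Z, IIns [] [(5, 3); (10, 2); (5, 12)] false 0); ((-1)%Z, IIns [(5, 3); (10, 2)] [(5, 12)] true 0); ((1)%Z, IIns [(5, 3)] [(0, 0); (5, 12)] false 10)]);
  ([(5, 3); (0, 0); (5, 15)], [((1)%Z, IIns [] [(5, 3); (10, 2); (5, 15)] false 0); ((-1)%Z, IIns [(5, 3); (10, 2)] [(5, 15)] true 0); ((1)%Z, IIns [(5, 3)] [(0, 0); (5, 15)] false 10)]);
  ([(5, 3); (0, 2); (5, 6)], [((1)%Z, IIns [] [(5, 3); (10, 0); (5, 6)] false 0); ((-1)%Z, IIns [(5, 3); (10, 0)] [(5, 6)] true 2); ((1)%Z, IIns [(5, 3)] [(0, 2); (5, 6)] false 10)]);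
  ([(5, 3); (0, 2); (5, 7)], [((1)%Z, IIns [] [(5, 3); (10, 0); (5, 7)] false 0); ((-1)%Z, IIns [(5, 3); (10, 0)] [(5, 7)] true 2); ((1)%Z, IIns [(5, 3)] [(0, 2); (5, 7)] false 10)]);
  ([(5, 3); (0, 2); (5, 13)], [((1)%Z, IIns [] [(5, 3); (10, 0); (5, 13)] false 0); ((-1)%Z, IIns [(5, 3); (10, 0)] [(5, 13)] true 2); ((1)%Z, IIns [(5, 3)] [(0, 2); (5, 13)] false 10)]);
  ([(5, 3); (0, 2); (5, 14)], [((1)%Z, IIns [] [(5, 3); (10, 0); (5, 14)] false 0); ((-1)%Z, IIns [(5, 3); (10, 0)] [(5, 14)] true 2); ((1)%Z, IIns [(5, 3)] [(0, 2); (5, 14)] false 10)]);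
  ([(5, 4); (0, 0); (5, 1)], [((1)%Z, IIns [] [(5, 4); (10, 8); (5, 1)] false 0); ((-1)%Z, IIns [(5, 4); (10, 8)] [(5, 1)] true 0); ((1)%Z, IIns [(5, 4)] [(0, 0); (5, 1)] false 10)]);
  ([(5, 4); (0, 0); (5, 3)], [((1)%Z, IIns [] [(5, 4); (10, 8); (5, 3)] false 0); ((-1)%Z, IIns [(5, 4); (10, 8)] [(5, 3)] true 0); ((1)%Z, IIns [(5, 4)] [(0, 0); (5, 3)] false 10)]);
  ([(5, 4); (0, 0); (5, 5)], [((1)%Z, IIns [] [(5, 4); (10, 8); (5, 5)] false 0); ((-1)%Z, IIns [(5, 4); (10, 8)] [(5, 5)] true 0); ((1)%Z, IIns [(5, 4)] [(0, 0); (5, 5)] false 10)]);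
  ([(5, 4); (0, 0); (5, 15)], [((1)%Z, IIns [] [(5, 4); (10, 8); (5, 15)] false 0); ((-1)%Z, IIns [(5, 4); (10, 8)] [(5, 15)] true 0); ((1)%Z, IIns [(5, 4)] [(0, 0); (5, 15)] false 10)]);
  ([(5, 10); (1, 5); (5, 1)], [((1)%Z, IIns [] [(5, 10); (9, 15); (5, 1)] false 0); ((-1)%Z, IIns [(5, 10); (9, 15)] [(5, 1)] true 5); ((1)%Z, IIns [(5, 10)] [(1, 5); (5, 1)] false 9)]);
  ([(5, 10); (1, 5); (5, 4)], [((1)%Z, IIns [] [(5, 10); (9, 15); (5, 4)] false 0); ((-1)%Z, IIns [(5, 10); (9, 15)] [(5, 4)] true 5); ((1)%Z, IIns [(5, 10)] [(1, 5); (5, 4)] false 9)]);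
  ([(5, 10); (1, 5); (5, 6)], [((1)%Z, IIns [] [(5, 10); (9, 15); (5, 6)] false 0); ((-1)%Z, IIns [(5, 10); (9, 15)] [(5, 6)] true 5); ((1)%Z, IIns [(5, 10)] [(1, 5); (5, 6)] false 9)]);
  ([(5, 10); (1, 5); (5, 9)], [((1)%Z, IIns [] [(5, 10); (9, 15); (5, 9)] false 0); ((-1)%Z, IIns [(5, 10); (9, 15)] [(5, 9)] true 5); ((1)%Z, IIns [(5, 10)] [(1, 5); (5, 9)] false 9)]);
  ([(5, 12); (0, 0); (5, 1)], [((1)%Z, IIns [] [(5, 12); (10, 8); (5, 1)] false 0); ((-1)%Z, IIns [(5, 12); (10, 8)] [(5, 1)] true 0); ((1)%Z, IIns [(5, 12)] [(0, 0); (5, 1)] false 10)]);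
  ([(5, 12); (0, 0); (5, 3)], [((1)%Z, IIns [] [(5, 12); (10, 8); (5, 3)] false 0); ((-1)%Z, IIns [(5, 12); (10, 8)] [(5, 3)] true 0); ((1)%Z, IIns [(5, 12)] [(0, 0); (5, 3)] false 10)]);
  ([(5, 12); (0, 0); (5, 5)], [((1)%Z, IIns [] [(5, 12); (10, 8); (5, 5)] false 0); ((-1)%Z, IIns [(5, 12); (10, 8)] [(5, 5)] true 0); ((1)%Z, IIns [(5, 12)] [(0, 0); (5, 5)] false 10)]);
  ([(5, 12); (0, 0); (5, 15)], [((1)%Z, IIns [] [(5, 12); (10, 8); (5, 15)] false 0); ((-1)%Z, IIns [(5, 12); (10, 8)] [(5, 15)] true 0); ((1)%Z, IIns [(5, 12)] [(0, 0); (5, 15)] false 10)]);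
  ([(6, 1); (0, 10); (6, 4)], [((1)%Z, IIns [] [(6, 1); (8, 8); (6, 4)] false 0); ((-1)%Z, IIns [(6, 1); (8, 8)] [(6, 4)] true 10); ((1)%Z, IIns [(6, 1)] [(0, 10); (6, 4)] false 8)]);
  ([(6, 1); (0, 10); (6, 7)], [((1)%Z, IIns [] [(6, 1); (8, 8); (6, 7)] false 0); ((-1)%Z, IIns [(6, 1); (8, 8)] [(6, 7)] true 10); ((1)%Z, IIns [(6, 1)] [(0, 10); (6, 7)] false 8)]);
  ([(6, 1); (0, 10); (6, 12)], [((1)%Z, IIns [] [(6, 1); (8, 8); (6, 12)] false 0); ((-1)%Z, IIns [(6, 1); (8, 8)] [(6, 12)] true 10); ((1)%Z, IIns [(6, 1)] [(0, 10); (6, 12)] false 8)]);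
  ([(6, 1); (0, 10); (6, 13)], [((1)%Z, IIns [] [(6, 1); (8, 8); (6, 13)] false 0); ((-1)%Z, IIns [(6, 1); (8, 8)] [(6, 13)] true 10); ((1)%Z, IIns [(6, 1)] [(0, 10); (6, 13)] false 8)]);
  ([(6, 1); (1, 5); (6, 0)], [((1)%Z, IIns [] [(6, 1); (11, 13); (6, 0)] false 0); ((-1)%Z, IIns [(6, 1); (11, 13)] [(6, 0)] true 5); ((1)%Z, IIns [(6, 1)] [(1, 5); (6, 0)] false 11)]);
  ([(6, 1); (1, 5); (6, 4)], [((1)%Z, IIns [] [(6, 1); (11, 13); (6, 4)] false 0); ((-1)%Z, IIns [(6, 1); (11, 13)] [(6, 4)] true 5); ((1)%Z, IIns [(6, 1)] [(1, 5); (6, 4)] false 11)]);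
  ([(6, 1); (1, 5); (6, 6)], [((1)%Z, IIns [] [(6, 1); (11, 13); (6, 6)] false 0); ((-1)%Z, IIns [(6, 1); (11, 13)] [(6, 6)] true 5); ((1)%Z, IIns [(6, 1)] [(1, 5); (6, 6)] false 11)]);
  ([(6, 1); (1, 5); (6, 10)], [((1)%Z, IIns [] [(6, 1); (11, 13); (6, 10)] false 0); ((-1)%Z, IIns [(6, 1); (11, 13)] [(6, 10)] true 5); ((1)%Z, IIns [(6, 1)] [(1, 5); (6, 10)] false 11)]);
  ([(6, 3); (0, 10); (6, 4)], [((1)%Z, IIns [] [(6, 3); (8, 8); (6, 4)] false 0); ((-1)%Z, IIns [(6, 3); (8, 8)] [(6, 4)] true 10); ((1)%Z, IIns [(6, 3)] [(0, 10); (6, 4)] false 8)]);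
  ([(6, 3); (0, 10); (6, 7)], [((1)%Z, IIns [] [(6, 3); (8, 8); (6, 7)] false 0); ((-1)%Z, IIns [(6, 3); (8, 8)] [(6, 7)] true 10); ((1)%Z, IIns [(6, 3)] [(0, 10); (6, 7)] false 8)]);
  ([(6, 3); (0, 10); (6, 12)], [((1)%Z, IIns [] [(6, 3); (8, 8); (6, 12)] false 0); ((-1)%Z, IIns [(6, 3); (8, 8)] [(6, 12)] true 10); ((1)%Z, IIns [(6, 3)] [(0, 10); (6, 12)] false 8)]);
  ([(6, 3); (0, 10); (6, 13)], [((1)%Z, IIns [] [(6, 3); (8, 8); (6, 13)] false 0); ((-1)%Z, IIns [(6, 3); (8, 8)] [(6, 13)] true 10); ((1)%Z, IIns [(6, 3)] [(0, 10); (6, 13)] false 8)]);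
  ([(6, 4); (0, 10); (6, 1)], [((1)%Z, IIns [] [(6, 4); (8, 2); (6, 1)] false 0); ((-1)%Z, IIns [(6, 4); (8, 2)] [(6, 1)] true 10); ((1)%Z, IIns [(6, 4)] [(0, 10); (6, 1)] false 8)]);
  ([(6, 4); (0, 10); (6, 3)], [((1)%Z, IIns [] [(6, 4); (8, 2); (6, 3)] false 0); ((-1)%Z, IIns [(6, 4); (8, 2)] [(6, 3)] true 10); ((1)%Z, IIns [(6, 4)] [(0, 10); (6, 3)] false 8)]);
  ([(6, 4); (0, 10); (6, 7)], [((1)%Z, IIns [] [(6, 4); (8, 2); (6, 7)] false 0); ((-1)%Z, IIns [(6, 4); (8, 2)] [(6, 7)] true 10); ((1)%Z, IIns [(6, 4)] [(0, 10); (6, 7)] false 8)]);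
  ([(6, 4); (0, 10); (6, 13)], [((1)%Z, IIns [] [(6, 4); (8, 2); (6, 13)] false 0); ((-1)%Z, IIns [(6, 4); (8, 2)] [(6, 13)] true 10); ((1)%Z, IIns [(6, 4)] [(0, 10); (6, 13)] false 8)]);
  ([(6, 5); (1, 1); (6, 0)], [((1)%Z, IIns [] [(6, 5); (11, 9); (6, 0)] false 0); ((-1)%Z, IIns [(6, 5); (11, 9)] [(6, 0)] true 1); ((1)%Z, IIns [(6, 5)] [(1, 1); (6, 0)] false 11)]);
  ([(6, 5); (1, 1); (6, 2)], [((1)%Z, IIns [] [(6, 5); (11, 9); (6, 2)] false 0); ((-1)%Z, IIns [(6, 5); (11, 9)] [(6, 2)] true 1); ((1)%Z, IIns [(6, 5)] [(1, 1); (6, 2)] false 11)]);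
  ([(6, 5); (1, 1); (6, 6)], [((1)%Z, IIns [] [(6, 5); (11, 9); (6, 6)] false 0); ((-1)%Z, IIns [(6, 5); (11, 9)] [(6, 6)] true 1); ((1)%Z, IIns [(6, 5)] [(1, 1); (6, 6)] false 11)]);
  ([(6, 5); (1, 1); (6, 12)], [((1)%Z, IIns [] [(6, 5); (11, 9); (6, 12)] false 0); ((-1)%Z, IIns [(6, 5); (11, 9)] [(6, 12)] true 1); ((1)%Z, IIns [(6, 5)] [(1, 1); (6, 12)] false 11)]);
  ([(6, 6); (0, 0); (6, 7)], [((1)%Z, IIns [] [(6, 6); (8, 8); (6, 7)] false 0); ((-1)%Z, IIns [(6, 6); (8, 8)] [(6, 7)] true 0); ((1)%Z, IIns [(6, 6)] [(0, 0); (6, 7)] false 8)]);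
  ([(6, 6); (0, 0); (6, 9)], [((1)%Z, IIns [] [(6, 6); (8, 8); (6, 9)] false 0); ((-1)%Z, IIns [(6, 6); (8, 8)] [(6, 9)] true 0); ((1)%Z, IIns [(6, 6)] [(0, 0); (6, 9)] false 8)]);
  ([(6, 6); (0, 0); (6, 11)], [((1)%Z, IIns [] [(6, 6); (8, 8); (6, 11)] false 0); ((-1)%Z, IIns [(6, 6); (8, 8)] [(6, 11)] true 0); ((1)%Z, IIns [(6, 6)] [(0, 0); (6, 11)] false 8)]);
  ([(6, 6); (0, 0); (6, 13)], [((1)%Z, IIns [] [(6, 6); (8, 8); (6, 13)] false 0); ((-1)%Z, IIns [(6, 6); (8, 8)] [(6, 13)] true 0); ((1)%Z, IIns [(6, 6)] [(0, 0); (6, 13)] false 8)]);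
  ([(6, 7); (0, 0); (6, 6)], [((1)%Z, IIns [] [(6, 7); (8, 10); (6, 6)] false 0); ((-1)%Z, IIns [(6, 7); (8, 10)] [(6, 6)] true 0); ((1)%Z, IIns [(6, 7)] [(0, 0); (6, 6)] false 8)]);
  ([(6, 7); (0, 0); (6, 9)], [((1)%Z, IIns [] [(6, 7); (8, 10); (6, 9)] false 0); ((-1)%Z, IIns [(6, 7); (8, 10)] [(6, 9)] true 0); ((1)%Z, IIns [(6, 7)] [(0, 0); (6, 9)] false 8)]);
  ([(6, 7); (0, 0); (6, 11)], [((1)%Z, IIns [] [(6, 7); (8, 10); (6, 11)] false 0); ((-1)%Z, IIns [(6, 7); (8, 10)] [(6, 11)] true 0); ((1)%Z, IIns [(6, 7)] [(0, 0); (6, 11)] false 8)]);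
  ([(6, 7); (0, 0); (6, 14)], [((1)%Z, IIns [] [(6, 7); (8, 10); (6, 14)] false 0); ((-1)%Z, IIns [(6, 7); (8, 10)] [(6, 14)] true 0); ((1)%Z, IIns [(6, 7)] [(0, 0); (6, 14)] false 8)]);
  ([(6, 9); (1, 5); (6, 0)], [((1)%Z, IIns [] [(6, 9); (11, 13); (6, 0)] false 0); ((-1)%Z, IIns [(6, 9); (11, 13)] [(6, 0)] true 5); ((1)%Z, IIns [(6, 9)] [(1, 5); (6, 0)] false 11)]);
  ([(6, 9); (1, 5); (6, 4)], [((1)%Z, IIns [] [(6, 9); (11, 13); (6, 4)] false 0); ((-1)%Z, IIns [(6, 9); (11, 13)] [(6, 4)] true 5); ((1)%Z, IIns [(6, 9)] [(1, 5); (6, 4)] false 11)]);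
  ([(6, 9); (1, 5); (6, 6)], [((1)%Z, IIns [] [(6, 9); (11, 13); (6, 6)] false 0); ((-1)%Z, IIns [(6, 9); (11, 13)] [(6, 6)] true 5); ((1)%Z, IIns [(6, 9)] [(1, 5); (6, 6)] false 11)]);
  ([(6, 9); (1, 5); (6, 10)], [((1)%Z, IIns [] [(6, 9); (11, 13); (6, 10)] false 0); ((-1)%Z, IIns [(6, 9); (11, 13)] [(6, 10)] true 5); ((1)%Z, IIns [(6, 9)] [(1, 5); (6, 10)] false 11)]);
  ([(6, 12); (0, 10); (6, 1)], [((1)%Z, IIns [] [(6, 12); (8, 2); (6, 1)] false 0); ((-1)%Z, IIns [(6, 12); (8, 2)] [(6, 1)] true 10); ((1)%Z, IIns [(6, 12)] [(0, 10); (6, 1)] false 8)]);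
  ([(6, 12); (0, 10); (6, 3)], [((1)%Z, IIns [] [(6, 12); (8, 2); (6, 3)] false 0); ((-1)%Z, IIns [(6, 12); (8, 2)] [(6, 3)] true 10); ((1)%Z, IIns [(6, 12)] [(0, 10); (6, 3)] false 8)]);
  ([(6, 12); (0, 10); (6, 7)], [((1)%Z, IIns [] [(6, 12); (8, 2); (6, 7)] false 0); ((-1)%Z, IIns [(6, 12); (8, 2)] [(6, 7)] true 10); ((1)%Z, IIns [(6, 12)] [(0, 10); (6, 7)] false 8)]);
  ([(6, 12); (0, 10); (6, 13)], [((1)%Z, IIns [] [(6, 12); (8, 2); (6, 13)] false 0); ((-1)%Z, IIns [(6, 12); (8, 2)] [(6, 13)] true 10); ((1)%Z, IIns [(6, 12)] [(0, 10); (6, 13)] false 8)]);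
  ([(6, 13); (0, 0); (6, 6)], [((1)%Z, IIns [] [(6, 13); (8, 10); (6, 6)] false 0); ((-1)%Z, IIns [(6, 13); (8, 10)] [(6, 6)] true 0); ((1)%Z, IIns [(6, 13)] [(0, 0); (6, 6)] false 8)]);
  ([(6, 13); (0, 0); (6, 9)], [((1)%Z, IIns [] [(6, 13); (8, 10); (6, 9)] false 0); ((-1)%Z, IIns [(6, 13); (8, 10)] [(6, 9)] true 0); ((1)%Z, IIns [(6, 13)] [(0, 0); (6, 9)] false 8)]);
  ([(6, 13); (0, 0); (6, 11)], [((1)%Z, IIns [] [(6, 13); (8, 10); (6, 11)] false 0); ((-1)%Z, IIns [(6, 13); (8, 10)] [(6, 11)] true 0); ((1)%Z, IIns [(6, 13)] [(0, 0); (6, 11)] false 8)]);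
  ([(6, 13); (0, 0); (6, 14)], [((1)%Z, IIns [] [(6, 13); (8, 10); (6, 14)] false 0); ((-1)%Z, IIns [(6, 13); (8, 10)] [(6, 14)] true 0); ((1)%Z, IIns [(6, 13)] [(0, 0); (6, 14)] false 8)]);
  ([(6, 13); (1, 1); (6, 0)], [((1)%Z, IIns [] [(6, 13); (11, 9); (6, 0)] false 0); ((-1)%Z, IIns [(6, 13); (11, 9)] [(6, 0)] true 1); ((1)%Z, IIns [(6, 13)] [(1, 1); (6, 0)] false 11)]);
  ([(6, 13); (1, 1); (6, 2)], [((1)%Z, IIns [] [(6, 13); (11, 9); (6, 2)] false 0); ((-1)%Z, IIns [(6, 13); (11, 9)] [(6, 2)] true 1); ((1)%Z, IIns [(6, 13)] [(1, 1); (6, 2)] false 11)]);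
  ([(6, 13); (1, 1); (6, 6)], [((1)%Z, IIns [] [(6, 13); (11, 9); (6, 6)] false 0); ((-1)%Z, IIns [(6, 13); (11, 9)] [(6, 6)] true 1); ((1)%Z, IIns [(6, 13)] [(1, 1); (6, 6)] false 11)]);
  ([(6, 13); (1, 1); (6, 12)], [((1)%Z, IIns [] [(6, 13); (11, 9); (6, 12)] false 0); ((-1)%Z, IIns [(6, 13); (11, 9)] [(6, 12)] true 1); ((1)%Z, IIns [(6, 13)] [(1, 1); (6, 12)] false 11)]);
  ([(6, 14); (0, 0); (6, 7)], [((1)%Z, IIns [] [(6, 14); (8, 8); (6, 7)] false 0); ((-1)%Z, IIns [(6, 14); (8, 8)] [(6, 7)] true 0); ((1)%Z, IIns [(6, 14)] [(0, 0); (6, 7)] false 8)]);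
  ([(6, 14); (0, 0); (6, 9)], [((1)%Z, IIns [] [(6, 14); (8, 8); (6, 9)] false 0); ((-1)%Z, IIns [(6, 14); (8, 8)] [(6, 9)] true 0); ((1)%Z, IIns [(6, 14)] [(0, 0); (6, 9)] false 8)]);
  ([(6, 14); (0, 0); (6, 11)], [((1)%Z, IIns [] [(6, 14); (8, 8); (6, 11)] false 0); ((-1)%Z, IIns [(6, 14); (8, 8)] [(6, 11)] true 0); ((1)%Z, IIns [(6, 14)] [(0, 0); (6, 11)] false 8)]);
  ([(6, 14); (0, 0); (6, 13)], [((1)%Z, IIns [] [(6, 14); (8, 8); (6, 13)] false 0); ((-1)%Z, IIns [(6, 14); (8, 8)] [(6, 13)] true 0); ((1)%Z, IIns [(6, 14)] [(0, 0); (6, 13)] false 8)])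
].
Definition fcert_1_1 : list (Z * inst) := [
  ((1)%Z, IIns [(0, 0); (1, 1)] [] false 0);
  ((1)%Z, IIns [(0, 2); (1, 1)] [] false 0);
  ((-1)%Z, IIns [(0, 2); (1, 1)] [] false 5);
  ((-1)%Z, IIns [] [(1, 1); (0, 0)] false 0);
  ((-1)%Z, IIns [] [(1, 1); (0, 2)] false 0);
  ((1)%Z, IIns [(1, 1); (0, 2)] [] false 5);
  ((1)%Z, IComm [(0, 5)] (0, 0) [(1, 1); (1, 3)] [] false);
  ((1)%Z, IComm [(0, 6)] (0, 0) [(1, 1); (1, 3)] [] false);
  ((1)%Z, IComm [(0, 12)] (0, 0) [(1, 1); (1, 3)] [] false);
  ((1)%Z, IComm [(0, 13)] (0, 0) [(1, 1); (1, 3)] [] false);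
  ((1)%Z, IComm [] (0, 0) [(1, 1); (1, 3)] [(0, 5)] false);
  ((1)%Z, IComm [] (0, 0) [(1, 1); (1, 3)] [(0, 6)] false);
  ((1)%Z, IComm [] (0, 0) [(1, 1); (1, 3)] [(0, 12)] false);
  ((1)%Z, IComm [] (0, 0) [(1, 1); (1, 3)] [(0, 13)] false);
  ((1)%Z, IComm [] (0, 0) [(1, 1); (1, 3)] [(5, 6)] false);
  ((1)%Z, IComm [] (0, 0) [(1, 1); (1, 3)] [(5, 13)] false);
  ((1)%Z, IComm [(0, 5)] (0, 2) [(1, 1); (1, 3)] [] false);
  ((1)%Z, IComm [(0, 6)] (0, 2) [(1, 1); (1, 3)] [] false);
  ((1)%Z, IComm [(0, 12)] (0, 2) [(1, 1); (1, 3)] [] false);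
  ((1)%Z, IComm [(0, 13)] (0, 2) [(1, 1); (1, 3)] [] false);
  ((1)%Z, IComm [] (0, 2) [(1, 1); (1, 3)] [(0, 5)] false);
  ((1)%Z, IComm [] (0, 2) [(1, 1); (1, 3)] [(0, 6)] false);
  ((1)%Z, IComm [] (0, 2) [(1, 1); (1, 3)] [(0, 12)] false);
  ((1)%Z, IComm [] (0, 2) [(1, 1); (1, 3)] [(0, 13)] false);
  ((-1)%Z, IComm [] (0, 2) [(1, 1); (1, 3)] [(5, 5)] false);
  ((-1)%Z, IComm [] (0, 2) [(1, 1); (1, 3)] [(5, 12)] false);
  ((1)%Z, IComm [(1, 1)] (0, 2) [(5, 1); (5, 3)] [] false);
  ((1)%Z, IComm [] (1, 1) [(0, 0); (0, 2)] [(5, 0)] false);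
  ((1)%Z, IComm [] (1, 1) [(0, 0); (0, 2)] [(5, 2)] false);
  ((1)%Z, IComm [] (1, 1) [(0, 0); (0, 2)] [(5, 6)] false);
  ((1)%Z, IComm [] (1, 1) [(0, 0); (0, 2)] [(5, 7)] false);
  ((1)%Z, IComm [] (1, 1) [(0, 0); (0, 2)] [(5, 13)] false);
  ((1)%Z, IComm [] (1, 1) [(0, 0); (0, 2)] [(5, 14)] false);
  ((1)%Z, IComm [(0, 0)] (1, 1) [(5, 0); (5, 2)] [] false)].
Definition fcert_2_2 : list (Z * inst) := [
  ((1)%Z, IIns [] [(0, 0); (1, 1)] false 2);
  ((1)%Z, IIns [] [(0, 0); (1, 3)] false 2);
  ((1)%Z, IIns [(0, 0)] [(2, 2)] false 1);
  ((-1)%Z, IIns [(1, 1); (0, 0)] [] false 2);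
  ((-1)%Z, IIns [(1, 3); (0, 0)] [] false 2);
  ((-1)%Z, IIns [(2, 2)] [(0, 0)] false 1);
  ((-1)%Z, IComm [] (0, 0) [(1, 1); (1, 3)] [] false);
  ((1)%Z, IComm [(2, 2)] (0, 0) [(1, 1); (1, 3)] [] false);
  ((1)%Z, IComm [(2, 8)] (0, 0) [(1, 1); (1, 3)] [] false);
  ((1)%Z, IComm [(2, 10)] (0, 0) [(1, 1); (1, 3)] [] false);
  ((1)%Z, IComm [] (0, 0) [(1, 1); (1, 3)] [(2, 2)] false);
  ((1)%Z, IComm [] (0, 0) [(1, 1); (1, 3)] [(2, 8)] false);
  ((1)%Z, IComm [] (0, 0) [(1, 1); (1, 3)] [(2, 10)] false)].
Definition fcert_6_6 : list (Z * inst) := [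
  ((-2)%Z, IIns [] [(1, 5)] false 0);
  ((2)%Z, IIns [(1, 5)] [] false 0);
  ((1)%Z, IIns [(0, 0)] [(1, 1)] false 6);
  ((-1)%Z, IIns [(0, 0); (1, 1)] [] false 0);
  ((-1)%Z, IIns [] [(0, 0); (1, 5)] false 6);
  ((1)%Z, IIns [(0, 0)] [(1, 5)] false 6);
  ((-1)%Z, IIns [(0, 0); (1, 5)] [] false 5);
  ((-1)%Z, IIns [(0, 0); (1, 5)] [] false 6);
  ((1)%Z, IIns [(0, 0)] [(6, 6)] false 1);
  ((-2)%Z, IIns [(0, 1); (1, 5)] [] false 0);
  ((-1)%Z, IIns [(0, 2); (1, 1)] [] false 0);
  ((1)%Z, IIns [(0, 2); (1, 1)] [] false 5);
  ((-2)%Z, IIns [(0, 4); (1, 5)] [] false 0);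
  ((-2)%Z, IIns [(0, 6); (1, 5)] [] false 0);
  ((-2)%Z, IIns [(0, 9); (1, 5)] [] false 0);
  ((-1)%Z, IIns [(0, 10)] [(1, 5)] false 6);
  ((-1)%Z, IIns [(0, 10); (1, 5)] [] false 6);
  ((1)%Z, IIns [] [(1, 1); (0, 0)] false 0);
  ((-1)%Z, IIns [(1, 1)] [(0, 0)] false 6);
  ((1)%Z, IIns [] [(1, 1); (0, 2)] false 0);
  ((-1)%Z, IIns [(1, 1); (0, 2)] [] false 5);
  ((1)%Z, IIns [] [(1, 5); (0, 0)] false 6);
  ((1)%Z, IIns [(1, 5)] [(0, 0)] false 5);
  ((2)%Z, IIns [] [(1, 5); (0, 1)] false 0);
  ((2)%Z, IIns [] [(1, 5); (0, 4)] false 0);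
  ((2)%Z, IIns [] [(1, 5); (0, 6)] false 0);
  ((2)%Z, IIns [] [(1, 5); (0, 9)] false 0);
  ((1)%Z, IIns [] [(1, 5); (0, 10)] false 6);
  ((1)%Z, IIns [(1, 5)] [(0, 10)] false 6);
  ((-1)%Z, IIns [(6, 6)] [(0, 0)] false 1);
  ((-1)%Z, IComm [(0, 5)] (0, 0) [(1, 1); (1, 3)] [] false);
  ((-1)%Z, IComm [(0, 6)] (0, 0) [(1, 1); (1, 3)] [] false);
  ((-1)%Z, IComm [(0, 12)] (0, 0) [(1, 1); (1, 3)] [] false);
  ((-1)%Z, IComm [(0, 13)] (0, 0) [(1, 1); (1, 3)] [] false);
  ((-1)%Z, IComm [] (0, 0) [(1, 1); (1, 3)] [(0, 5)] false);
  ((-1)%Z, IComm [] (0, 0) [(1, 1); (1, 3)] [(0, 6)] false);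
  ((-1)%Z, IComm [] (0, 0) [(1, 1); (1, 3)] [(0, 12)] false);
  ((-1)%Z, IComm [] (0, 0) [(1, 1); (1, 3)] [(0, 13)] false);
  ((-1)%Z, IComm [] (0, 0) [(1, 1); (1, 3)] [(5, 6)] false);
  ((-1)%Z, IComm [] (0, 0) [(1, 1); (1, 3)] [(5, 13)] false);
  ((1)%Z, IComm [] (0, 0) [(1, 1); (1, 3)] [(6, 5)] false);
  ((2)%Z, IComm [(0, 1)] (0, 0) [(1, 5); (1, 15)] [] false);
  ((2)%Z, IComm [(0, 4)] (0, 0) [(1, 5); (1, 15)] [] false);
  ((2)%Z, IComm [(0, 6)] (0, 0) [(1, 5); (1, 15)] [] false);
  ((2)%Z, IComm [(0, 9)] (0, 0) [(1, 5); (1, 15)] [] false);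
  ((2)%Z, IComm [] (0, 0) [(1, 5); (1, 15)] [(0, 1)] false);
  ((2)%Z, IComm [] (0, 0) [(1, 5); (1, 15)] [(0, 4)] false);
  ((2)%Z, IComm [] (0, 0) [(1, 5); (1, 15)] [(0, 6)] false);
  ((2)%Z, IComm [] (0, 0) [(1, 5); (1, 15)] [(0, 9)] false);
  ((-1)%Z, IComm [] (0, 0) [(1, 5); (1, 15)] [(5, 6)] false);
  ((-1)%Z, IComm [] (0, 0) [(1, 5); (1, 15)] [(5, 9)] false);
  ((1)%Z, IComm [] (0, 0) [(1, 5); (1, 15)] [(6, 1)] false);
  ((-1)%Z, IComm [(1, 5)] (0, 0) [(5, 1); (5, 3)] [] false);
  ((-1)%Z, IComm [(1, 5)] (0, 0) [(5, 4); (5, 12)] [] false);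
  ((1)%Z, IComm [(1, 1)] (0, 0) [(6, 6); (6, 14)] [] false);
  ((1)%Z, IComm [] (0, 0) [(6, 6); (6, 14)] [(1, 1)] false);
  ((1)%Z, IComm [] (0, 0) [(6, 6); (6, 14)] [(1, 5)] false);
  ((1)%Z, IComm [(1, 1)] (0, 0) [(6, 7); (6, 13)] [] false);
  ((1)%Z, IComm [] (0, 0) [(6, 7); (6, 13)] [(1, 5)] false);
  ((-2)%Z, IComm [(0, 10)] (0, 1) [(1, 5); (1, 13)] [] false);
  ((-2)%Z, IComm [] (0, 1) [(1, 5); (1, 13)] [(0, 10)] false);
  ((-1)%Z, IComm [(0, 5)] (0, 2) [(1, 1); (1, 3)] [] false);
  ((-1)%Z, IComm [(0, 6)] (0, 2) [(1, 1); (1, 3)] [] false);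
  ((-1)%Z, IComm [(0, 12)] (0, 2) [(1, 1); (1, 3)] [] false);
  ((-1)%Z, IComm [(0, 13)] (0, 2) [(1, 1); (1, 3)] [] false);
  ((-1)%Z, IComm [(6, 6)] (0, 2) [(1, 1); (1, 3)] [] false);
  ((-1)%Z, IComm [] (0, 2) [(1, 1); (1, 3)] [(0, 5)] false);
  ((-1)%Z, IComm [] (0, 2) [(1, 1); (1, 3)] [(0, 6)] false);
  ((-1)%Z, IComm [] (0, 2) [(1, 1); (1, 3)] [(0, 12)] false);
  ((-1)%Z, IComm [] (0, 2) [(1, 1); (1, 3)] [(0, 13)] false);
  ((1)%Z, IComm [] (0, 2) [(1, 1); (1, 3)] [(5, 5)] false);
  ((1)%Z, IComm [] (0, 2) [(1, 1); (1, 3)] [(5, 12)] false);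
  ((-1)%Z, IComm [] (0, 2) [(1, 1); (1, 3)] [(6, 6)] false);
  ((-1)%Z, IComm [] (0, 2) [(1, 1); (1, 3)] [(6, 13)] false);
  ((-1)%Z, IComm [(1, 1)] (0, 2) [(5, 1); (5, 3)] [] false);
  ((-2)%Z, IComm [(0, 10)] (0, 4) [(1, 5); (1, 7)] [] false);
  ((-2)%Z, IComm [] (0, 4) [(1, 5); (1, 7)] [(0, 10)] false);
  ((-2)%Z, IComm [(0, 10)] (0, 6) [(1, 5); (1, 7)] [] false);
  ((-2)%Z, IComm [] (0, 6) [(1, 5); (1, 7)] [(0, 10)] false);
  ((-2)%Z, IComm [(0, 10)] (0, 9) [(1, 5); (1, 13)] [] false);
  ((-2)%Z, IComm [] (0, 9) [(1, 5); (1, 13)] [(0, 10)] false);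
  ((-1)%Z, IComm [(6, 6)] (0, 10) [(1, 5); (1, 15)] [] false);
  ((1)%Z, IComm [] (0, 10) [(1, 5); (1, 15)] [(5, 1)] false);
  ((1)%Z, IComm [] (0, 10) [(1, 5); (1, 15)] [(5, 4)] false);
  ((-1)%Z, IComm [] (0, 10) [(1, 5); (1, 15)] [(6, 6)] false);
  ((-1)%Z, IComm [] (0, 10) [(1, 5); (1, 15)] [(6, 9)] false);
  ((-1)%Z, IComm [(1, 5)] (0, 10) [(6, 1); (6, 3)] [] false);
  ((-1)%Z, IComm [] (0, 10) [(6, 1); (6, 3)] [(1, 5)] false);
  ((-1)%Z, IComm [(1, 5)] (0, 10) [(6, 4); (6, 12)] [] false);
  ((-1)%Z, IComm [] (0, 10) [(6, 4); (6, 12)] [(1, 5)] false);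
  ((-1)%Z, IComm [(6, 6)] (1, 1) [(0, 0); (0, 2)] [] false);
  ((-1)%Z, IComm [(6, 14)] (1, 1) [(0, 0); (0, 2)] [] false);
  ((-1)%Z, IComm [] (1, 1) [(0, 0); (0, 2)] [(5, 0)] false);
  ((-1)%Z, IComm [] (1, 1) [(0, 0); (0, 2)] [(5, 2)] false);
  ((-1)%Z, IComm [] (1, 1) [(0, 0); (0, 2)] [(5, 6)] false);
  ((-1)%Z, IComm [] (1, 1) [(0, 0); (0, 2)] [(5, 7)] false);
  ((-1)%Z, IComm [] (1, 1) [(0, 0); (0, 2)] [(5, 13)] false);
  ((-1)%Z, IComm [] (1, 1) [(0, 0); (0, 2)] [(5, 14)] false);
  ((-1)%Z, IComm [] (1, 1) [(0, 0); (0, 2)] [(6, 6)] false);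
  ((-1)%Z, IComm [] (1, 1) [(0, 0); (0, 2)] [(6, 7)] false);
  ((-1)%Z, IComm [] (1, 1) [(0, 0); (0, 2)] [(6, 13)] false);
  ((-1)%Z, IComm [] (1, 1) [(0, 0); (0, 2)] [(6, 14)] false);
  ((-1)%Z, IComm [(0, 0)] (1, 1) [(5, 0); (5, 2)] [] false);
  ((-1)%Z, IComm [(0, 0)] (1, 1) [(6, 5); (6, 13)] [] false);
  ((1)%Z, IComm [(6, 0)] (1, 5) [(0, 0); (0, 10)] [] false);
  ((1)%Z, IComm [(6, 1)] (1, 5) [(0, 0); (0, 10)] [] false);
  ((1)%Z, IComm [(6, 3)] (1, 5) [(0, 0); (0, 10)] [] false);
  ((1)%Z, IComm [(6, 4)] (1, 5) [(0, 0); (0, 10)] [] false);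
  ((1)%Z, IComm [(6, 9)] (1, 5) [(0, 0); (0, 10)] [] false);
  ((1)%Z, IComm [(6, 10)] (1, 5) [(0, 0); (0, 10)] [] false);
  ((1)%Z, IComm [(6, 11)] (1, 5) [(0, 0); (0, 10)] [] false);
  ((1)%Z, IComm [(6, 12)] (1, 5) [(0, 0); (0, 10)] [] false);
  ((1)%Z, IComm [] (1, 5) [(0, 0); (0, 10)] [(5, 1)] false);
  ((1)%Z, IComm [] (1, 5) [(0, 0); (0, 10)] [(5, 3)] false);
  ((1)%Z, IComm [] (1, 5) [(0, 0); (0, 10)] [(5, 4)] false);
  ((1)%Z, IComm [] (1, 5) [(0, 0); (0, 10)] [(5, 12)] false);
  ((1)%Z, IComm [] (1, 5) [(0, 0); (0, 10)] [(6, 0)] false);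
  ((1)%Z, IComm [] (1, 5) [(0, 0); (0, 10)] [(6, 1)] false);
  ((1)%Z, IComm [] (1, 5) [(0, 0); (0, 10)] [(6, 3)] false);
  ((1)%Z, IComm [] (1, 5) [(0, 0); (0, 10)] [(6, 4)] false);
  ((1)%Z, IComm [] (1, 5) [(0, 0); (0, 10)] [(6, 10)] false);
  ((1)%Z, IComm [] (1, 5) [(0, 0); (0, 10)] [(6, 12)] false);
  ((-1)%Z, IComm [(0, 0)] (1, 5) [(5, 0); (5, 10)] [] false);
  ((-1)%Z, IComm [(0, 0)] (1, 5) [(6, 1); (6, 9)] [] false)].
Definition auts : list (list nat) := [
  [0; 1; 2; 3; 4; 5; 6; 7; 8; 9; 10; 11; 12; 13; 14; 15];
  [0; 1; 2; 3; 15; 12; 13; 14; 10; 11; 8; 9; 5; 6; 7; 4];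
  [0; 3; 2; 1; 5; 4; 7; 6; 10; 9; 8; 11; 15; 14; 13; 12];
  [0; 3; 2; 1; 12; 15; 14; 13; 8; 11; 10; 9; 4; 7; 6; 5];
  [0; 4; 8; 12; 1; 5; 9; 13; 2; 6; 10; 14; 3; 7; 11; 15];
  [0; 4; 8; 12; 15; 3; 7; 11; 10; 14; 2; 6; 5; 9; 13; 1];
  [0; 5; 10; 15; 3; 4; 9; 14; 2; 7; 8; 13; 1; 6; 11; 12];
  [0; 5; 10; 15; 12; 1; 6; 11; 8; 13; 2; 7; 4; 9; 14; 3];
  [0; 12; 8; 4; 3; 15; 11; 7; 2; 14; 10; 6; 1; 13; 9; 5];
  [0; 12; 8; 4; 5; 1; 13; 9; 10; 6; 2; 14; 15; 11; 7; 3];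
  [0; 15; 10; 5; 1; 12; 11; 6; 2; 13; 8; 7; 3; 14; 9; 4];
  [0; 15; 10; 5; 4; 3; 14; 9; 8; 7; 2; 13; 12; 11; 6; 1];
  [1; 0; 3; 2; 6; 5; 4; 7; 11; 10; 9; 8; 12; 15; 14; 13];
  [1; 0; 3; 2; 13; 12; 15; 14; 9; 8; 11; 10; 5; 4; 7; 6];
  [1; 2; 3; 0; 5; 6; 7; 4; 9; 10; 11; 8; 13; 14; 15; 12];
  [1; 2; 3; 0; 12; 13; 14; 15; 11; 8; 9; 10; 6; 7; 4; 5];
  [1; 5; 9; 13; 2; 6; 10; 14; 3; 7; 11; 15; 0; 4; 8; 12];
  [1; 5; 9; 13; 12; 0; 4; 8; 11; 15; 3; 7; 6; 10; 14; 2];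
  [1; 6; 11; 12; 0; 5; 10; 15; 3; 4; 9; 14; 2; 7; 8; 13];
  [1; 6; 11; 12; 13; 2; 7; 8; 9; 14; 3; 4; 5; 10; 15; 0];
  [1; 12; 11; 6; 2; 13; 8; 7; 3; 14; 9; 4; 0; 15; 10; 5];
  [1; 12; 11; 6; 5; 0; 15; 10; 9; 4; 3; 14; 13; 8; 7; 2];
  [1; 13; 9; 5; 0; 12; 8; 4; 3; 15; 11; 7; 2; 14; 10; 6];
  [1; 13; 9; 5; 6; 2; 14; 10; 11; 7; 3; 15; 12; 8; 4; 0];
  [2; 1; 0; 3; 7; 6; 5; 4; 8; 11; 10; 9; 13; 12; 15; 14];
  [2; 1; 0; 3; 14; 13; 12; 15; 10; 9; 8; 11; 6; 5; 4; 7];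
  [2; 3; 0; 1; 6; 7; 4; 5; 10; 11; 8; 9; 14; 15; 12; 13];
  [2; 3; 0; 1; 13; 14; 15; 12; 8; 9; 10; 11; 7; 4; 5; 6];
  [2; 6; 10; 14; 3; 7; 11; 15; 0; 4; 8; 12; 1; 5; 9; 13];
  [2; 6; 10; 14; 13; 1; 5; 9; 8; 12; 0; 4; 7; 11; 15; 3];
  [2; 7; 8; 13; 1; 6; 11; 12; 0; 5; 10; 15; 3; 4; 9; 14];
  [2; 7; 8; 13; 14; 3; 4; 9; 10; 15; 0; 5; 6; 11; 12; 1];
  [2; 13; 8; 7; 3; 14; 9; 4; 0; 15; 10; 5; 1; 12; 11; 6];
  [2; 13; 8; 7; 6; 1; 12; 11; 10; 5; 0; 15; 14; 9; 4; 3];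
  [2; 14; 10; 6; 1; 13; 9; 5; 0; 12; 8; 4; 3; 15; 11; 7];
  [2; 14; 10; 6; 7; 3; 15; 11; 8; 4; 0; 12; 13; 9; 5; 1];
  [3; 0; 1; 2; 7; 4; 5; 6; 11; 8; 9; 10; 15; 12; 13; 14];
  [3; 0; 1; 2; 14; 15; 12; 13; 9; 10; 11; 8; 4; 5; 6; 7];
  [3; 2; 1; 0; 4; 7; 6; 5; 9; 8; 11; 10; 14; 13; 12; 15];
  [3; 2; 1; 0; 15; 14; 13; 12; 11; 10; 9; 8; 7; 6; 5; 4];
  [3; 4; 9; 14; 2; 7; 8; 13; 1; 6; 11; 12; 0; 5; 10; 15];
  [3; 4; 9; 14; 15; 0; 5; 10; 11; 12; 1; 6; 7; 8; 13; 2];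
  [3; 7; 11; 15; 0; 4; 8; 12; 1; 5; 9; 13; 2; 6; 10; 14];
  [3; 7; 11; 15; 14; 2; 6; 10; 9; 13; 1; 5; 4; 8; 12; 0];
  [3; 14; 9; 4; 0; 15; 10; 5; 1; 12; 11; 6; 2; 13; 8; 7];
  [3; 14; 9; 4; 7; 2; 13; 8; 11; 6; 1; 12; 15; 10; 5; 0];
  [3; 15; 11; 7; 2; 14; 10; 6; 1; 13; 9; 5; 0; 12; 8; 4];
  [3; 15; 11; 7; 4; 0; 12; 8; 9; 5; 1; 13; 14; 10; 6; 2];
  [4; 0; 12; 8; 7; 3; 15; 11; 6; 2; 14; 10; 5; 1; 13; 9];
  [4; 0; 12; 8; 9; 5; 1; 13; 14; 10; 6; 2; 3; 15; 11; 7];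
  [4; 3; 14; 9; 5; 0; 15; 10; 6; 1; 12; 11; 7; 2; 13; 8];
  [4; 3; 14; 9; 8; 7; 2; 13; 12; 11; 6; 1; 0; 15; 10; 5];
  [4; 5; 6; 7; 3; 0; 1; 2; 14; 15; 12; 13; 9; 10; 11; 8];
  [4; 5; 6; 7; 8; 9; 10; 11; 12; 13; 14; 15; 0; 1; 2; 3];
  [4; 7; 6; 5; 0; 3; 2; 1; 12; 15; 14; 13; 8; 11; 10; 9];
  [4; 7; 6; 5; 9; 8; 11; 10; 14; 13; 12; 15; 3; 2; 1; 0];
  [4; 8; 12; 0; 3; 7; 11; 15; 14; 2; 6; 10; 9; 13; 1; 5];
  [4; 8; 12; 0; 5; 9; 13; 1; 6; 10; 14; 2; 7; 11; 15; 3];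
  [4; 9; 14; 3; 0; 5; 10; 15; 12; 1; 6; 11; 8; 13; 2; 7];
  [4; 9; 14; 3; 7; 8; 13; 2; 6; 11; 12; 1; 5; 10; 15; 0];
  [5; 0; 15; 10; 6; 1; 12; 11; 7; 2; 13; 8; 4; 3; 14; 9];
  [5; 0; 15; 10; 9; 4; 3; 14; 13; 8; 7; 2; 1; 12; 11; 6];
  [5; 1; 13; 9; 4; 0; 12; 8; 7; 3; 15; 11; 6; 2; 14; 10];
  [5; 1; 13; 9; 10; 6; 2; 14; 15; 11; 7; 3; 0; 12; 8; 4];
  [5; 4; 7; 6; 1; 0; 3; 2; 13; 12; 15; 14; 9; 8; 11; 10];
  [5; 4; 7; 6; 10; 9; 8; 11; 15; 14; 13; 12; 0; 3; 2; 1];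
  [5; 6; 7; 4; 0; 1; 2; 3; 15; 12; 13; 14; 10; 11; 8; 9];
  [5; 6; 7; 4; 9; 10; 11; 8; 13; 14; 15; 12; 1; 2; 3; 0];
  [5; 9; 13; 1; 0; 4; 8; 12; 15; 3; 7; 11; 10; 14; 2; 6];
  [5; 9; 13; 1; 6; 10; 14; 2; 7; 11; 15; 3; 4; 8; 12; 0];
  [5; 10; 15; 0; 1; 6; 11; 12; 13; 2; 7; 8; 9; 14; 3; 4];
  [5; 10; 15; 0; 4; 9; 14; 3; 7; 8; 13; 2; 6; 11; 12; 1];
  [6; 1; 12; 11; 7; 2; 13; 8; 4; 3; 14; 9; 5; 0; 15; 10];
  [6; 1; 12; 11; 10; 5; 0; 15; 14; 9; 4; 3; 2; 13; 8; 7];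
  [6; 2; 14; 10; 5; 1; 13; 9; 4; 0; 12; 8; 7; 3; 15; 11];
  [6; 2; 14; 10; 11; 7; 3; 15; 12; 8; 4; 0; 1; 13; 9; 5];
  [6; 5; 4; 7; 2; 1; 0; 3; 14; 13; 12; 15; 10; 9; 8; 11];
  [6; 5; 4; 7; 11; 10; 9; 8; 12; 15; 14; 13; 1; 0; 3; 2];
  [6; 7; 4; 5; 1; 2; 3; 0; 12; 13; 14; 15; 11; 8; 9; 10];
  [6; 7; 4; 5; 10; 11; 8; 9; 14; 15; 12; 13; 2; 3; 0; 1];
  [6; 10; 14; 2; 1; 5; 9; 13; 12; 0; 4; 8; 11; 15; 3; 7];
  [6; 10; 14; 2; 7; 11; 15; 3; 4; 8; 12; 0; 5; 9; 13; 1];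
  [6; 11; 12; 1; 2; 7; 8; 13; 14; 3; 4; 9; 10; 15; 0; 5];
  [6; 11; 12; 1; 5; 10; 15; 0; 4; 9; 14; 3; 7; 8; 13; 2];
  [7; 2; 13; 8; 4; 3; 14; 9; 5; 0; 15; 10; 6; 1; 12; 11];
  [7; 2; 13; 8; 11; 6; 1; 12; 15; 10; 5; 0; 3; 14; 9; 4];
  [7; 3; 15; 11; 6; 2; 14; 10; 5; 1; 13; 9; 4; 0; 12; 8];
  [7; 3; 15; 11; 8; 4; 0; 12; 13; 9; 5; 1; 2; 14; 10; 6];
  [7; 4; 5; 6; 2; 3; 0; 1; 13; 14; 15; 12; 8; 9; 10; 11];
  [7; 4; 5; 6; 11; 8; 9; 10; 15; 12; 13; 14; 3; 0; 1; 2];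
  [7; 6; 5; 4; 3; 2; 1; 0; 15; 14; 13; 12; 11; 10; 9; 8];
  [7; 6; 5; 4; 8; 11; 10; 9; 13; 12; 15; 14; 2; 1; 0; 3];
  [7; 8; 13; 2; 3; 4; 9; 14; 15; 0; 5; 10; 11; 12; 1; 6];
  [7; 8; 13; 2; 6; 11; 12; 1; 5; 10; 15; 0; 4; 9; 14; 3];
  [7; 11; 15; 3; 2; 6; 10; 14; 13; 1; 5; 9; 8; 12; 0; 4];
  [7; 11; 15; 3; 4; 8; 12; 0; 5; 9; 13; 1; 6; 10; 14; 2];
  [8; 4; 0; 12; 11; 7; 3; 15; 10; 6; 2; 14; 9; 5; 1; 13];
  [8; 4; 0; 12; 13; 9; 5; 1; 2; 14; 10; 6; 7; 3; 15; 11];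
  [8; 7; 2; 13; 9; 4; 3; 14; 10; 5; 0; 15; 11; 6; 1; 12];
  [8; 7; 2; 13; 12; 11; 6; 1; 0; 15; 10; 5; 4; 3; 14; 9];
  [8; 9; 10; 11; 7; 4; 5; 6; 2; 3; 0; 1; 13; 14; 15; 12];
  [8; 9; 10; 11; 12; 13; 14; 15; 0; 1; 2; 3; 4; 5; 6; 7];
  [8; 11; 10; 9; 4; 7; 6; 5; 0; 3; 2; 1; 12; 15; 14; 13];
  [8; 11; 10; 9; 13; 12; 15; 14; 2; 1; 0; 3; 7; 6; 5; 4];
  [8; 12; 0; 4; 7; 11; 15; 3; 2; 6; 10; 14; 13; 1; 5; 9];
  [8; 12; 0; 4; 9; 13; 1; 5; 10; 14; 2; 6; 11; 15; 3; 7];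
  [8; 13; 2; 7; 4; 9; 14; 3; 0; 5; 10; 15; 12; 1; 6; 11];
  [8; 13; 2; 7; 11; 12; 1; 6; 10; 15; 0; 5; 9; 14; 3; 4];
  [9; 4; 3; 14; 10; 5; 0; 15; 11; 6; 1; 12; 8; 7; 2; 13];
  [9; 4; 3; 14; 13; 8; 7; 2; 1; 12; 11; 6; 5; 0; 15; 10];
  [9; 5; 1; 13; 8; 4; 0; 12; 11; 7; 3; 15; 10; 6; 2; 14];
  [9; 5; 1; 13; 14; 10; 6; 2; 3; 15; 11; 7; 4; 0; 12; 8];
  [9; 8; 11; 10; 5; 4; 7; 6; 1; 0; 3; 2; 13; 12; 15; 14];
  [9; 8; 11; 10; 14; 13; 12; 15; 3; 2; 1; 0; 4; 7; 6; 5];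
  [9; 10; 11; 8; 4; 5; 6; 7; 3; 0; 1; 2; 14; 15; 12; 13];
  [9; 10; 11; 8; 13; 14; 15; 12; 1; 2; 3; 0; 5; 6; 7; 4];
  [9; 13; 1; 5; 4; 8; 12; 0; 3; 7; 11; 15; 14; 2; 6; 10];
  [9; 13; 1; 5; 10; 14; 2; 6; 11; 15; 3; 7; 8; 12; 0; 4];
  [9; 14; 3; 4; 5; 10; 15; 0; 1; 6; 11; 12; 13; 2; 7; 8];
  [9; 14; 3; 4; 8; 13; 2; 7; 11; 12; 1; 6; 10; 15; 0; 5];
  [10; 5; 0; 15; 11; 6; 1; 12; 8; 7; 2; 13; 9; 4; 3; 14];
  [10; 5; 0; 15; 14; 9; 4; 3; 2; 13; 8; 7; 6; 1; 12; 11];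
  [10; 6; 2; 14; 9; 5; 1; 13; 8; 4; 0; 12; 11; 7; 3; 15];
  [10; 6; 2; 14; 15; 11; 7; 3; 0; 12; 8; 4; 5; 1; 13; 9];
  [10; 9; 8; 11; 6; 5; 4; 7; 2; 1; 0; 3; 14; 13; 12; 15];
  [10; 9; 8; 11; 15; 14; 13; 12; 0; 3; 2; 1; 5; 4; 7; 6];
  [10; 11; 8; 9; 5; 6; 7; 4; 0; 1; 2; 3; 15; 12; 13; 14];
  [10; 11; 8; 9; 14; 15; 12; 13; 2; 3; 0; 1; 6; 7; 4; 5];
  [10; 14; 2; 6; 5; 9; 13; 1; 0; 4; 8; 12; 15; 3; 7; 11];
  [10; 14; 2; 6; 11; 15; 3; 7; 8; 12; 0; 4; 9; 13; 1; 5];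
  [10; 15; 0; 5; 6; 11; 12; 1; 2; 7; 8; 13; 14; 3; 4; 9];
  [10; 15; 0; 5; 9; 14; 3; 4; 8; 13; 2; 7; 11; 12; 1; 6];
  [11; 6; 1; 12; 8; 7; 2; 13; 9; 4; 3; 14; 10; 5; 0; 15];
  [11; 6; 1; 12; 15; 10; 5; 0; 3; 14; 9; 4; 7; 2; 13; 8];
  [11; 7; 3; 15; 10; 6; 2; 14; 9; 5; 1; 13; 8; 4; 0; 12];
  [11; 7; 3; 15; 12; 8; 4; 0; 1; 13; 9; 5; 6; 2; 14; 10];
  [11; 8; 9; 10; 6; 7; 4; 5; 1; 2; 3; 0; 12; 13; 14; 15];
  [11; 8; 9; 10; 15; 12; 13; 14; 3; 0; 1; 2; 7; 4; 5; 6];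
  [11; 10; 9; 8; 7; 6; 5; 4; 3; 2; 1; 0; 15; 14; 13; 12];
  [11; 10; 9; 8; 12; 15; 14; 13; 1; 0; 3; 2; 6; 5; 4; 7];
  [11; 12; 1; 6; 7; 8; 13; 2; 3; 4; 9; 14; 15; 0; 5; 10];
  [11; 12; 1; 6; 10; 15; 0; 5; 9; 14; 3; 4; 8; 13; 2; 7];
  [11; 15; 3; 7; 6; 10; 14; 2; 1; 5; 9; 13; 12; 0; 4; 8];
  [11; 15; 3; 7; 8; 12; 0; 4; 9; 13; 1; 5; 10; 14; 2; 6];
  [12; 0; 4; 8; 11; 15; 3; 7; 6; 10; 14; 2; 1; 5; 9; 13];
  [12; 0; 4; 8; 13; 1; 5; 9; 14; 2; 6; 10; 15; 3; 7; 11];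
  [12; 1; 6; 11; 8; 13; 2; 7; 4; 9; 14; 3; 0; 5; 10; 15];
  [12; 1; 6; 11; 15; 0; 5; 10; 14; 3; 4; 9; 13; 2; 7; 8];
  [12; 8; 4; 0; 1; 13; 9; 5; 6; 2; 14; 10; 11; 7; 3; 15];
  [12; 8; 4; 0; 15; 11; 7; 3; 14; 10; 6; 2; 13; 9; 5; 1];
  [12; 11; 6; 1; 0; 15; 10; 5; 4; 3; 14; 9; 8; 7; 2; 13];
  [12; 11; 6; 1; 13; 8; 7; 2; 14; 9; 4; 3; 15; 10; 5; 0];
  [12; 13; 14; 15; 0; 1; 2; 3; 4; 5; 6; 7; 8; 9; 10; 11];
  [12; 13; 14; 15; 11; 8; 9; 10; 6; 7; 4; 5; 1; 2; 3; 0];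
  [12; 15; 14; 13; 1; 0; 3; 2; 6; 5; 4; 7; 11; 10; 9; 8];
  [12; 15; 14; 13; 8; 11; 10; 9; 4; 7; 6; 5; 0; 3; 2; 1];
  [13; 1; 5; 9; 8; 12; 0; 4; 7; 11; 15; 3; 2; 6; 10; 14];
  [13; 1; 5; 9; 14; 2; 6; 10; 15; 3; 7; 11; 12; 0; 4; 8];
  [13; 2; 7; 8; 9; 14; 3; 4; 5; 10; 15; 0; 1; 6; 11; 12];
  [13; 2; 7; 8; 12; 1; 6; 11; 15; 0; 5; 10; 14; 3; 4; 9];
  [13; 8; 7; 2; 1; 12; 11; 6; 5; 0; 15; 10; 9; 4; 3; 14];
  [13; 8; 7; 2; 14; 9; 4; 3; 15; 10; 5; 0; 12; 11; 6; 1];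
  [13; 9; 5; 1; 2; 14; 10; 6; 7; 3; 15; 11; 8; 4; 0; 12];
  [13; 9; 5; 1; 12; 8; 4; 0; 15; 11; 7; 3; 14; 10; 6; 2];
  [13; 12; 15; 14; 2; 1; 0; 3; 7; 6; 5; 4; 8; 11; 10; 9];
  [13; 12; 15; 14; 9; 8; 11; 10; 5; 4; 7; 6; 1; 0; 3; 2];
  [13; 14; 15; 12; 1; 2; 3; 0; 5; 6; 7; 4; 9; 10; 11; 8];
  [13; 14; 15; 12; 8; 9; 10; 11; 7; 4; 5; 6; 2; 3; 0; 1];
  [14; 2; 6; 10; 9; 13; 1; 5; 4; 8; 12; 0; 3; 7; 11; 15];
  [14; 2; 6; 10; 15; 3; 7; 11; 12; 0; 4; 8; 13; 1; 5; 9];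
  [14; 3; 4; 9; 10; 15; 0; 5; 6; 11; 12; 1; 2; 7; 8; 13];
  [14; 3; 4; 9; 13; 2; 7; 8; 12; 1; 6; 11; 15; 0; 5; 10];
  [14; 9; 4; 3; 2; 13; 8; 7; 6; 1; 12; 11; 10; 5; 0; 15];
  [14; 9; 4; 3; 15; 10; 5; 0; 12; 11; 6; 1; 13; 8; 7; 2];
  [14; 10; 6; 2; 3; 15; 11; 7; 4; 0; 12; 8; 9; 5; 1; 13];
  [14; 10; 6; 2; 13; 9; 5; 1; 12; 8; 4; 0; 15; 11; 7; 3];
  [14; 13; 12; 15; 3; 2; 1; 0; 4; 7; 6; 5; 9; 8; 11; 10];
  [14; 13; 12; 15; 10; 9; 8; 11; 6; 5; 4; 7; 2; 1; 0; 3];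
  [14; 15; 12; 13; 2; 3; 0; 1; 6; 7; 4; 5; 10; 11; 8; 9];
  [14; 15; 12; 13; 9; 10; 11; 8; 4; 5; 6; 7; 3; 0; 1; 2];
  [15; 0; 5; 10; 11; 12; 1; 6; 7; 8; 13; 2; 3; 4; 9; 14];
  [15; 0; 5; 10; 14; 3; 4; 9; 13; 2; 7; 8; 12; 1; 6; 11];
  [15; 3; 7; 11; 10; 14; 2; 6; 5; 9; 13; 1; 0; 4; 8; 12];
  [15; 3; 7; 11; 12; 0; 4; 8; 13; 1; 5; 9; 14; 2; 6; 10];
  [15; 10; 5; 0; 3; 14; 9; 4; 7; 2; 13; 8; 11; 6; 1; 12];
  [15; 10; 5; 0; 12; 11; 6; 1; 13; 8; 7; 2; 14; 9; 4; 3];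
  [15; 11; 7; 3; 0; 12; 8; 4; 5; 1; 13; 9; 10; 6; 2; 14];
  [15; 11; 7; 3; 14; 10; 6; 2; 13; 9; 5; 1; 12; 8; 4; 0];
  [15; 12; 13; 14; 3; 0; 1; 2; 7; 4; 5; 6; 11; 8; 9; 10];
  [15; 12; 13; 14; 10; 11; 8; 9; 5; 6; 7; 4; 0; 1; 2; 3];
  [15; 14; 13; 12; 0; 3; 2; 1; 5; 4; 7; 6; 10; 9; 8; 11];
  [15; 14; 13; 12; 11; 10; 9; 8; 7; 6; 5; 4; 3; 2; 1; 0]].

Definition z3f (w : word) : bool := existsb (fun p => weqb w (fst p)) z3list.

Lemma z3_all : forallb (fun p => check zp2 nz3 [(1%Z, fst p)] (snd p)) z3list = true.
Proof. vm_compute. reflexivity. Qed.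

Definition tgt (k l : nat) : fsum := [(1%Z, [(0, 0); (k, l)]); ((-1)%Z, [(k, l); (0, 0)])].

Lemma final_11 : check zp2 z3f (tgt 1 1) fcert_1_1 = true.
Proof. vm_compute. reflexivity. Qed.
Lemma final_22 : check zp2 z3f (tgt 2 2) fcert_2_2 = true.
Proof. vm_compute. reflexivity. Qed.
Lemma final_66 : check zp2 z3f (tgt 6 6) fcert_6_6 = true.
Proof. vm_compute. reflexivity. Qed.

Definition rep (t : nat) : nat := match t with 1 => 1 | 2 => 2 | _ => 6 end.

Definition findaut (a c : nat) : list nat :=
  hd [] (filter (fun p => Nat.eqb (nth 0 p 0) a && Nat.eqb (nth (rep (typ a c)) p 0) c) auts).

Lemma aut_all : all16 (fun a => all16 (fun c =>
   Nat.eqb (typ a c) 0 ||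
   (isaut (findaut a c) && Nat.eqb (nth 0 (findaut a c) 0) a &&
    Nat.eqb (nth (rep (typ a c)) (findaut a c) 0) c && Nat.eqb (typ 0 (rep (typ a c))) (typ a c)))) = true.
Proof. vm_compute. reflexivity. Qed.

Lemma typ_all : all16 (fun a => all16 (fun c => Nat.eqb (typ a c) (typ c a) &&
   (negb (Nat.eqb (typ a c) 0) || Nat.eqb a c) && Nat.leb (typ a c) 3)) = true.
Proof. vm_compute. reflexivity. Qed.

Local Open Scope nat_scope.

Section Fin.
Variable A : CStarAlgebra.
Variable u : ShV -> ShV -> A.
Hypothesis Hm : magic_unitary_for sh_vertices sh_adj A u.

Lemma z3f_sound x y z : z3f [x; y; z] = true -> prodw A u [x; y; z] = cz.
Proof.
  unfold z3f. intros H. apply existsb_exists in H as [p [Hp E]].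
  apply weqb_eq in E. pose proof z3_all as Z. rewrite forallb_forall in Z.
  specialize (Z p Hp). rewrite E.
  apply (check_word A u Hm zp2 nz3 (fst p) 1%Z (snd p)); auto.
  - apply zp2_sound; auto.
  - apply nz3_sound.
  - discriminate.
Qed.

Lemma rep_comm k l cert : check zp2 z3f (tgt k l) cert = true ->
  cmul (U A u (0, 0)) (U A u (k, l)) = cmul (U A u (k, l)) (U A u (0, 0)).
Proof.
  intros H. apply (check_sound A u Hm zp2 z3f (zp2_sound A u Hm) z3f_sound) in H.
  unfold tgt in H. rewrite !evalF_cons, evalF_nil, cadd_0r, zmul_1, zmul_m1 in H.
  apply sub_eq0 in H. simpl in H. rewrite !cmul_1r in H. exact H.
Qed.
End Fin.

Lemma rep_all (A : CStarAlgebra) u t : magic_unitary_for sh_vertices sh_adj A u ->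
  1 <= t <= 3 ->
  cmul (U A u (0, 0)) (U A u (rep t, rep t)) = cmul (U A u (rep t, rep t)) (U A u (0, 0)).
Proof.
  intros Hm Ht. destruct t as [|[|[|[|t]]]]; try lia.
  - exact (rep_comm A u Hm 1 1 fcert_1_1 final_11).
  - exact (rep_comm A u Hm 2 2 fcert_2_2 final_22).
  - exact (rep_comm A u Hm 6 6 fcert_6_6 final_66).
Qed.

Theorem mainTheorem20 : no_quantum_symmetry sh_vertices sh_adj.
Proof.
  intros A u Hm i j k l.
  rewrite <- (vx_idx i), <- (vx_idx j), <- (vx_idx k), <- (vx_idx l).
  pose proof (idx_lt i) as Hi. pose proof (idx_lt j) as Hj.
  pose proof (idx_lt k) as Hk. pose proof (idx_lt l) as Hl.
  set (a := idx i) in *. set (b := idx j) in *. set (c := idx k) in *. set (d := idx l) in *.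
  change (u (vx a) (vx b)) with (U A u (a, b)).
  change (u (vx c) (vx d)) with (U A u (c, d)).
  pose proof typ_all as TA.
  pose proof (all16_spec _ (all16_spec _ TA a Hi) c Hk) as Tac.
  pose proof (all16_spec _ (all16_spec _ TA b Hj) d Hl) as Tbd.
  cbv beta in Tac, Tbd.
  apply andb_prop in Tac as [Tac Tac3]. apply andb_prop in Tac as [Tac1 Tac2].
  apply andb_prop in Tbd as [Tbd Tbd3]. apply andb_prop in Tbd as [Tbd1 Tbd2].
  apply Nat.eqb_eq in Tac1, Tbd1. apply Nat.leb_le in Tac3, Tbd3.
  destruct (Nat.eqb (typ a c) (typ b d)) eqn:E.
  - apply Nat.eqb_eq in E. destruct (Nat.eqb (typ a c) 0) eqn:E0.
    + apply Nat.eqb_eq in E0. rewrite <- E, E0 in Tbd2.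
      simpl in Tac2, Tbd2. apply Nat.eqb_eq in Tac2, Tbd2. subst a b. rewrite Tac2, Tbd2. reflexivity.
    + apply Nat.eqb_neq in E0.
      pose proof aut_all as AA.
      pose proof (all16_spec _ (all16_spec _ AA a Hi) c Hk) as Aac.
      pose proof (all16_spec _ (all16_spec _ AA b Hj) d Hl) as Abd.
      cbv beta in Aac, Abd.
      assert (E0' : Nat.eqb (typ a c) 0 = false) by (apply Nat.eqb_neq; auto).
      assert (E1' : Nat.eqb (typ b d) 0 = false) by (apply Nat.eqb_neq; lia).
      rewrite E0', orb_false_l in Aac. rewrite E1', orb_false_l in Abd.
      apply andb_prop in Aac as [Aac _]. apply andb_prop in Aac as [Aac Ac]. apply andb_prop in Aac as [Sa Aa].
      apply andb_prop in Abd as [Abd _]. apply andb_prop in Abd as [Abd Ad]. apply andb_prop in Abd as [Sb Ab].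
      apply Nat.eqb_eq in Aa, Ac, Ab, Ad.
      rewrite <- E in Ad.
      pose proof (transport A u _ _ Hm Sa Sb) as Hm'.
      assert (Ht : 1 <= typ a c <= 3) by lia.
      pose proof (rep_all A _ (typ a c) Hm' Ht) as R.
      assert (Hr : rep (typ a c) < 16) by (destruct (typ a c) as [|[|[|]]]; simpl; lia).
      rewrite !U_transport in R; try lia.
      rewrite Aa, Ab, Ac, Ad in R. exact R.
  - apply Nat.eqb_neq in E.
    assert (Z1 : zp2 (a, b) (c, d) = true).
    { unfold zp2, lt16. simpl. rewrite !(proj2 (Nat.ltb_lt _ _)); auto. simpl.
      apply negb_true_iff, Nat.eqb_neq. exact E. }
    assert (Z2 : zp2 (c, d) (a, b) = true).
    { unfold zp2, lt16. simpl. rewrite !(proj2 (Nat.ltb_lt _ _)); auto. simpl.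
      apply negb_true_iff, Nat.eqb_neq. rewrite <- Tac1, <- Tbd1. exact E. }
    rewrite (zp2_sound A u Hm _ _ Z1), (zp2_sound A u Hm _ _ Z2). reflexivity.
Qed.
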